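(* Let $\Gamma\subset\mathrm{SL}_2(\mathbb{C})$ be the binary tetrahedral group, and let $S$ be the set of triples $(M_1,M_2,M_3)\in\Gamma^3$ which generate $\Gamma$, modulo simultaneous conjugation by elements of $\mathrm{SL}_2(\mathbb{C})$. Then $|S|=520$, and $S$ breaks up into exactly six geometric equivalence classes, of sizes $96,32,48,72,128,144$.
   Context: For a triple $(M_1,M_2,M_3)$ set $M_4=(M_3M_2M_1)^{-1}$, so $M_4M_3M_2M_1=1$. For $i=1,2,3$ the operation $\omega_i$ on quadruples fixes $M_j$ for $j\neq i,i+1$ and sends $(M_i,M_{i+1})\mapsto(M_{i+1},\,M_{i+1}M_iM_{i+1}^{-1})$. Two elements of $S$ are geometrically equivalent if they are related by a sequence of the operations $\omega_i^{\pm1}$ ($i=1,2,3$), simultaneous conjugation, and even sign changes (multiplying an even number of the four matrices $M_1,\dots,M_4$ by $-1$). *)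

(* Defs.v *)
From Stdlib Require Import Reals Relations.
From mathcomp Require Import all_boot all_order all_algebra.
From mathcomp Require Import complex Rstruct.

Set Implicit Arguments.
Unset Strict Implicit.
Unset Printing Implicit Defensive.

Import Order.TTheory GRing.Theory Num.Theory.
Local Open Scope ring_scope.

Definition C : Type := (R : rcfType)[i].

Notation mat2 := ('M[C]_2).

(* Quaternion units as 2x2 complex matrices (det 1). *)
Definition qI : mat2 := \matrix_(a < 2, b < 2)
  (if a == b then (if a == 0 then 'i else - 'i) else 0).
Definition qJ : mat2 := \matrix_(a < 2, b < 2)
  (if a == b then 0 else (if a == 0 then 1 else -1)).
Definition qK : mat2 := qI *m qJ.

(* The binary tetrahedral group, in its standard embedding into SL_2(C):
   the 24 unit Hurwitz quaternions
   +-1, +-I, +-J, +-K, (+-1 +- I +- J +- K)/2. *)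
Definition sgn (b : bool) : C := if b then -1 else 1.

Definition binary_tetrahedral : seq mat2 :=
  [:: 1; -1; qI; - qI; qJ; - qJ; qK; - qK] ++
  [seq (2%:R)^-1 *: (sgn s.1.1 *: 1 + sgn s.1.2 *: qI
                     + sgn s.2.1 *: qJ + sgn s.2.2 *: qK)
  | s <- [seq (x, y) | x <- [seq (a, b) | a <- [:: false; true], b <- [:: false; true]],
                       y <- [seq (c, d) | c <- [:: false; true], d <- [:: false; true]]]].

Definition Gamma (M : mat2) : Prop := M \in binary_tetrahedral.

Definition triple := (mat2 * mat2 * mat2)%type.

Inductive gen_by (M1 M2 M3 : mat2) : mat2 -> Prop :=
| gen_one : gen_by M1 M2 M3 1
| gen_mul : forall X Y, (X = M1 \/ X = M2 \/ X = M3 \/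
                         X = invmx M1 \/ X = invmx M2 \/ X = invmx M3) ->
            gen_by M1 M2 M3 Y -> gen_by M1 M2 M3 (X *m Y).

Definition generates_Gamma (T : triple) : Prop :=
  let: (M1, M2, M3) := T in
  [/\ Gamma M1, Gamma M2, Gamma M3 &
      forall X, gen_by M1 M2 M3 X <-> Gamma X].

Definition SL2 (P : mat2) : Prop := \det P = 1.

Definition conj_triple (P : mat2) (T : triple) : triple :=
  let: (M1, M2, M3) := T in
  (P *m M1 *m invmx P, P *m M2 *m invmx P, P *m M3 *m invmx P).

Definition conj_equiv (T T' : triple) : Prop :=
  exists2 P, SL2 P & T' = conj_triple P T.

Definition M4_of (T : triple) : mat2 :=
  let: (M1, M2, M3) := T in invmx (M3 *m M2 *m M1).

(* The braid moves omega_1, omega_2, omega_3 on quadruples, restricted to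
   the first three entries (M4 is determined by them). *)
Definition omega1 (T : triple) : triple :=
  let: (M1, M2, M3) := T in (M2, M2 *m M1 *m invmx M2, M3).
Definition omega2 (T : triple) : triple :=
  let: (M1, M2, M3) := T in (M1, M3, M3 *m M2 *m invmx M3).
Definition omega3 (T : triple) : triple :=
  let: (M1, M2, M3) := T in (M1, M2, M4_of T).

(* Even sign change: multiply M_k by e_k (k = 1..4), with e_k = +-1 and an
   even number of e_k equal to -1; the resulting triple is (e1 M1, e2 M2, e3 M3)
   (and then M4 is indeed multiplied by e4). *)
Definition even_sign_change (T T' : triple) : Prop :=
  let: (M1, M2, M3) := T in
  exists e1 e2 e3 e4 : bool,
    ~~ (e1 (+) e2 (+) e3 (+) e4) /\
    T' = (sgn e1 *: M1, sgn e2 *: M2, sgn e3 *: M3).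

Definition geo_step (T T' : triple) : Prop :=
  [/\ generates_Gamma T, generates_Gamma T' &
      (T' = omega1 T \/ T' = omega2 T \/ T' = omega3 T \/
       conj_equiv T T' \/ even_sign_change T T')].

(* Geometric equivalence: generated by the omega_i^{+-1}, conjugation and
   even sign changes (inverses are covered by the symmetric closure). *)
Definition geo_equiv : triple -> triple -> Prop := clos_refl_sym_trans _ geo_step.
Definition T0 : triple := (1%R, 1%R, 1%R).

(* Main.v *)
Require Import Defs.
From Stdlib Require Import Reals Relations.
From mathcomp Require Import all_boot all_order all_algebra.
From mathcomp Require Import complex Rstruct.
From mathcomp Require Import ring.
Set Warnings "-notation-overridden -ambiguous-paths -notation-incompatible-prefix".
Set Implicit Arguments. Unset Strict Implicit. Unset Printing Implicit Defensive.
Import Order.TTheory GRing.Theory Num.Theory.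
Local Open Scope ring_scope.
Local Notation C := Defs.C.

Definition mk2 (a b c d : C) : mat2 :=
  \matrix_(i < 2, j < 2) if i == 0 then (if j == 0 then a else b) else (if j == 0 then c else d).

Lemma mk2_mul a b c d a' b' c' d' :
  mk2 a b c d *m mk2 a' b' c' d' = mk2 (a*a' + b*c') (a*b'+b*d') (c*a'+d*c') (c*b'+d*d').
Proof.
apply/matrixP => i j; rewrite !mxE !big_ord_recl big_ord0 !mxE /=.
by case: i => [[|[|//]] ?]; case: j => [[|[|//]] ?]; rewrite /= addr0.
Qed.

Lemma mk2_eq a b c d a' b' c' d' : a = a' -> b = b' -> c = c' -> d = d' ->
  mk2 a b c d = mk2 a' b' c' d'.
Proof. by move=> -> -> -> ->. Qed.

Lemma mk2_1 : (1 : mat2) = mk2 1 0 0 1.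
Proof. by apply/matrixP => i j; rewrite !mxE; case: i => [[|[|//]] ?]; case: j => [[|[|//]] ?]. Qed.
Lemma mk2_I : qI = mk2 'i 0 0 (-'i).
Proof. by apply/matrixP => i j; rewrite !mxE; case: i => [[|[|//]] ?]; case: j => [[|[|//]] ?]. Qed.
Lemma mk2_J : qJ = mk2 0 1 (-1) 0.
Proof. by apply/matrixP => i j; rewrite !mxE; case: i => [[|[|//]] ?]; case: j => [[|[|//]] ?]. Qed.
Lemma mk2_K : qK = mk2 0 'i 'i 0.
Proof. rewrite /qK mk2_I mk2_J mk2_mul; apply: mk2_eq; ring. Qed.
Lemma mk2_scale (s a b c d : C) : s *: mk2 a b c d = mk2 (s*a) (s*b) (s*c) (s*d).
Proof. by apply/matrixP => i j; rewrite !mxE; case: (i == 0); case: (j==0). Qed.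
Lemma mk2_add a b c d a' b' c' d' :
  mk2 a b c d + mk2 a' b' c' d' = mk2 (a+a') (b+b') (c+c') (d+d').
Proof. by apply/matrixP => i j; rewrite !mxE; case: (i == 0); case: (j==0). Qed.

Definition Q := (int * int * int * int)%type.
Definition E4 (x : Q) : mat2 := let: (a, b, c, d) := x in
  a%:~R *: 1 + b%:~R *: qI + c%:~R *: qJ + d%:~R *: qK.

Lemma ii : ('i : C) * 'i = -1.
Proof. by rewrite -expr2 sqrCi. Qed.

Lemma E4E a b c d : E4 (a, b, c, d) =
  mk2 (a%:~R + b%:~R * 'i) (c%:~R + d%:~R * 'i) (- c%:~R + d%:~R * 'i) (a%:~R - b%:~R * 'i).
Proof.
rewrite /E4 mk2_1 mk2_I mk2_J mk2_K !mk2_scale !mk2_add; apply: mk2_eq; ring.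
Qed.

Definition hm (x y : Q) : Q :=
  let: (a1, b1, c1, d1) := x in let: (a2, b2, c2, d2) := y in
  (a1*a2-b1*b2-c1*c2-d1*d2, a1*b2+b1*a2+c1*d2-d1*c2, a1*c2-b1*d2+c1*a2+d1*b2, a1*d2+b1*c2-c1*b2+d1*a2).

Lemma E4M x y : E4 x *m E4 y = E4 (hm x y).
Proof.
case: x => [[[a b] c] d]; case: y => [[[e f] g] h].
rewrite /hm !E4E mk2_mul; apply: mk2_eq; rewrite ?rmorphD ?rmorphB ?rmorphM /=; ring: ii.
Qed.

Definition Gl : seq Q := [:: (Posz 2, Posz 0, Posz 0, Posz 0);
  (Negz 1, Posz 0, Posz 0, Posz 0);
  (Posz 0, Posz 2, Posz 0, Posz 0);
  (Posz 0, Negz 1, Posz 0, Posz 0);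
  (Posz 0, Posz 0, Posz 2, Posz 0);
  (Posz 0, Posz 0, Negz 1, Posz 0);
  (Posz 0, Posz 0, Posz 0, Posz 2);
  (Posz 0, Posz 0, Posz 0, Negz 1);
  (Posz 1, Posz 1, Posz 1, Posz 1);
  (Posz 1, Posz 1, Posz 1, Negz 0);
  (Posz 1, Posz 1, Negz 0, Posz 1);
  (Posz 1, Posz 1, Negz 0, Negz 0);
  (Posz 1, Negz 0, Posz 1, Posz 1);
  (Posz 1, Negz 0, Posz 1, Negz 0);
  (Posz 1, Negz 0, Negz 0, Posz 1);
  (Posz 1, Negz 0, Negz 0, Negz 0);
  (Negz 0, Posz 1, Posz 1, Posz 1);
  (Negz 0, Posz 1, Posz 1, Negz 0);
  (Negz 0, Posz 1, Negz 0, Posz 1);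
  (Negz 0, Posz 1, Negz 0, Negz 0);
  (Negz 0, Negz 0, Posz 1, Posz 1);
  (Negz 0, Negz 0, Posz 1, Negz 0);
  (Negz 0, Negz 0, Negz 0, Posz 1);
  (Negz 0, Negz 0, Negz 0, Negz 0)].
Definition MT : seq (seq nat) := [:: [:: 0; 1; 2; 3; 4; 5; 6; 7; 8; 9; 10; 11; 12; 13; 14; 15; 16; 17; 18; 19; 20; 21; 22; 23];
  [:: 1; 0; 3; 2; 5; 4; 7; 6; 23; 22; 21; 20; 19; 18; 17; 16; 15; 14; 13; 12; 11; 10; 9; 8];
  [:: 2; 3; 1; 0; 6; 7; 5; 4; 18; 16; 19; 17; 10; 8; 11; 9; 22; 20; 23; 21; 14; 12; 15; 13];
  [:: 3; 2; 0; 1; 7; 6; 4; 5; 13; 15; 12; 14; 21; 23; 20; 22; 9; 11; 8; 10; 17; 19; 16; 18];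
  [:: 4; 5; 7; 6; 1; 0; 2; 3; 17; 21; 9; 13; 16; 20; 8; 12; 19; 23; 11; 15; 18; 22; 10; 14];
  [:: 5; 4; 6; 7; 0; 1; 3; 2; 14; 10; 22; 18; 15; 11; 23; 19; 12; 8; 20; 16; 13; 9; 21; 17];
  [:: 6; 7; 4; 5; 3; 2; 1; 0; 20; 12; 16; 8; 22; 14; 18; 10; 21; 13; 17; 9; 23; 15; 19; 11];
  [:: 7; 6; 5; 4; 2; 3; 0; 1; 11; 19; 15; 23; 9; 17; 13; 21; 10; 18; 14; 22; 8; 16; 12; 20];
  [:: 8; 23; 17; 14; 20; 11; 18; 13; 16; 4; 2; 9; 6; 12; 10; 0; 1; 21; 19; 7; 22; 3; 5; 15];
  [:: 9; 22; 19; 12; 16; 15; 10; 21; 2; 17; 11; 7; 8; 4; 0; 13; 18; 1; 5; 23; 6; 20; 14; 3];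
  [:: 10; 21; 16; 15; 12; 19; 22; 9; 6; 8; 18; 2; 14; 0; 5; 11; 20; 4; 1; 17; 3; 13; 23; 7];
  [:: 11; 20; 18; 13; 8; 23; 14; 17; 10; 2; 5; 19; 0; 9; 15; 7; 6; 16; 22; 1; 12; 4; 3; 21];
  [:: 12; 19; 9; 22; 21; 10; 16; 15; 4; 13; 8; 0; 20; 3; 6; 14; 17; 7; 2; 11; 1; 23; 18; 5];
  [:: 13; 18; 11; 20; 17; 14; 8; 23; 9; 7; 0; 15; 4; 21; 12; 3; 2; 19; 10; 5; 16; 1; 6; 22];
  [:: 14; 17; 8; 23; 13; 18; 20; 11; 12; 0; 6; 10; 3; 15; 22; 5; 4; 9; 16; 2; 21; 7; 1; 19];
  [:: 15; 16; 10; 21; 9; 22; 12; 19; 0; 11; 14; 5; 13; 7; 3; 23; 8; 2; 6; 18; 4; 17; 20; 1];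
  [:: 16; 15; 21; 10; 22; 9; 19; 12; 1; 20; 17; 4; 18; 6; 2; 8; 23; 3; 7; 13; 5; 14; 11; 0];
  [:: 17; 14; 23; 8; 18; 13; 11; 20; 19; 1; 7; 21; 2; 16; 9; 4; 5; 22; 15; 3; 10; 6; 0; 12];
  [:: 18; 13; 20; 11; 14; 17; 23; 8; 22; 6; 1; 16; 5; 10; 19; 2; 3; 12; 21; 4; 15; 0; 7; 9];
  [:: 19; 12; 22; 9; 10; 21; 15; 16; 5; 18; 23; 1; 11; 2; 7; 17; 14; 6; 3; 20; 0; 8; 13; 4];
  [:: 20; 11; 13; 18; 23; 8; 17; 14; 21; 3; 4; 12; 1; 22; 16; 6; 7; 15; 9; 0; 19; 5; 2; 10];
  [:: 21; 10; 15; 16; 19; 12; 9; 22; 7; 23; 13; 3; 17; 1; 4; 20; 11; 5; 0; 14; 2; 18; 8; 6];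
  [:: 22; 9; 12; 19; 15; 16; 21; 10; 3; 14; 20; 6; 23; 5; 1; 18; 13; 0; 4; 8; 7; 11; 17; 2];
  [:: 23; 8; 14; 17; 11; 20; 13; 18; 15; 5; 3; 22; 7; 19; 21; 1; 0; 10; 12; 6; 9; 2; 4; 16]].
Definition INV : seq nat := [:: 0; 1; 3; 2; 5; 4; 7; 6; 15; 14; 13; 12; 11; 10; 9; 8; 23; 22; 21; 20; 19; 18; 17; 16].
Definition Ul : seq Q := [:: (Posz 2, Posz 0, Posz 0, Posz 0);
  (Negz 1, Posz 0, Posz 0, Posz 0);
  (Posz 0, Posz 2, Posz 0, Posz 0);
  (Posz 0, Negz 1, Posz 0, Posz 0);
  (Posz 0, Posz 0, Posz 2, Posz 0);
  (Posz 0, Posz 0, Negz 1, Posz 0);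
  (Posz 0, Posz 0, Posz 0, Posz 2);
  (Posz 0, Posz 0, Posz 0, Negz 1);
  (Posz 1, Posz 1, Posz 1, Posz 1);
  (Posz 1, Posz 1, Posz 1, Negz 0);
  (Posz 1, Posz 1, Negz 0, Posz 1);
  (Posz 1, Posz 1, Negz 0, Negz 0);
  (Posz 1, Negz 0, Posz 1, Posz 1);
  (Posz 1, Negz 0, Posz 1, Negz 0);
  (Posz 1, Negz 0, Negz 0, Posz 1);
  (Posz 1, Negz 0, Negz 0, Negz 0);
  (Negz 0, Posz 1, Posz 1, Posz 1);
  (Negz 0, Posz 1, Posz 1, Negz 0);
  (Negz 0, Posz 1, Negz 0, Posz 1);
  (Negz 0, Posz 1, Negz 0, Negz 0);
  (Negz 0, Negz 0, Posz 1, Posz 1);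
  (Negz 0, Negz 0, Posz 1, Negz 0);
  (Negz 0, Negz 0, Negz 0, Posz 1);
  (Negz 0, Negz 0, Negz 0, Negz 0);
  (Posz 4, Posz 4, Posz 0, Posz 0);
  (Negz 3, Negz 3, Posz 0, Posz 0);
  (Negz 3, Posz 4, Posz 0, Posz 0);
  (Posz 4, Negz 3, Posz 0, Posz 0);
  (Posz 0, Posz 0, Posz 4, Posz 4);
  (Posz 0, Posz 0, Negz 3, Negz 3);
  (Posz 0, Posz 0, Negz 3, Posz 4);
  (Posz 0, Posz 0, Posz 4, Negz 3);
  (Posz 0, Posz 4, Posz 0, Posz 4);
  (Posz 0, Posz 4, Posz 4, Posz 0);
  (Posz 0, Posz 4, Negz 3, Posz 0);
  (Posz 0, Posz 4, Posz 0, Negz 3);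
  (Posz 4, Posz 0, Posz 0, Posz 4);
  (Posz 4, Posz 0, Posz 4, Posz 0);
  (Posz 4, Posz 0, Negz 3, Posz 0);
  (Posz 4, Posz 0, Posz 0, Negz 3);
  (Negz 3, Posz 0, Posz 0, Posz 4);
  (Negz 3, Posz 0, Posz 4, Posz 0);
  (Negz 3, Posz 0, Negz 3, Posz 0);
  (Negz 3, Posz 0, Posz 0, Negz 3);
  (Posz 0, Negz 3, Posz 0, Posz 4);
  (Posz 0, Negz 3, Posz 4, Posz 0);
  (Posz 0, Negz 3, Negz 3, Posz 0);
  (Posz 0, Negz 3, Posz 0, Negz 3)].
Definition CJ : seq (seq nat) := [:: [:: 0; 1; 2; 3; 4; 5; 6; 7; 8; 9; 10; 11; 12; 13; 14; 15; 16; 17; 18; 19; 20; 21; 22; 23];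
  [:: 0; 1; 2; 3; 4; 5; 6; 7; 8; 9; 10; 11; 12; 13; 14; 15; 16; 17; 18; 19; 20; 21; 22; 23];
  [:: 0; 1; 2; 3; 5; 4; 7; 6; 11; 10; 9; 8; 15; 14; 13; 12; 19; 18; 17; 16; 23; 22; 21; 20];
  [:: 0; 1; 2; 3; 5; 4; 7; 6; 11; 10; 9; 8; 15; 14; 13; 12; 19; 18; 17; 16; 23; 22; 21; 20];
  [:: 0; 1; 3; 2; 4; 5; 7; 6; 13; 12; 15; 14; 9; 8; 11; 10; 21; 20; 23; 22; 17; 16; 19; 18];
  [:: 0; 1; 3; 2; 4; 5; 7; 6; 13; 12; 15; 14; 9; 8; 11; 10; 21; 20; 23; 22; 17; 16; 19; 18];
  [:: 0; 1; 3; 2; 5; 4; 6; 7; 14; 15; 12; 13; 10; 11; 8; 9; 22; 23; 20; 21; 18; 19; 16; 17];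
  [:: 0; 1; 3; 2; 5; 4; 6; 7; 14; 15; 12; 13; 10; 11; 8; 9; 22; 23; 20; 21; 18; 19; 16; 17];
  [:: 0; 1; 4; 5; 6; 7; 2; 3; 8; 12; 9; 13; 10; 14; 11; 15; 16; 20; 17; 21; 18; 22; 19; 23];
  [:: 0; 1; 7; 6; 2; 3; 5; 4; 11; 9; 15; 13; 10; 8; 14; 12; 19; 17; 23; 21; 18; 16; 22; 20];
  [:: 0; 1; 6; 7; 3; 2; 5; 4; 14; 12; 10; 8; 15; 13; 11; 9; 22; 20; 18; 16; 23; 21; 19; 17];
  [:: 0; 1; 5; 4; 6; 7; 3; 2; 14; 10; 15; 11; 12; 8; 13; 9; 22; 18; 23; 19; 20; 16; 21; 17];
  [:: 0; 1; 7; 6; 3; 2; 4; 5; 13; 15; 9; 11; 12; 14; 8; 10; 21; 23; 17; 19; 20; 22; 16; 18];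
  [:: 0; 1; 5; 4; 7; 6; 2; 3; 11; 15; 10; 14; 9; 13; 8; 12; 19; 23; 18; 22; 17; 21; 16; 20];
  [:: 0; 1; 4; 5; 7; 6; 3; 2; 13; 9; 12; 8; 15; 11; 14; 10; 21; 17; 20; 16; 23; 19; 22; 18];
  [:: 0; 1; 6; 7; 2; 3; 4; 5; 8; 10; 12; 14; 9; 11; 13; 15; 16; 18; 20; 22; 17; 19; 21; 23];
  [:: 0; 1; 6; 7; 2; 3; 4; 5; 8; 10; 12; 14; 9; 11; 13; 15; 16; 18; 20; 22; 17; 19; 21; 23];
  [:: 0; 1; 4; 5; 7; 6; 3; 2; 13; 9; 12; 8; 15; 11; 14; 10; 21; 17; 20; 16; 23; 19; 22; 18];
  [:: 0; 1; 5; 4; 7; 6; 2; 3; 11; 15; 10; 14; 9; 13; 8; 12; 19; 23; 18; 22; 17; 21; 16; 20];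
  [:: 0; 1; 7; 6; 3; 2; 4; 5; 13; 15; 9; 11; 12; 14; 8; 10; 21; 23; 17; 19; 20; 22; 16; 18];
  [:: 0; 1; 5; 4; 6; 7; 3; 2; 14; 10; 15; 11; 12; 8; 13; 9; 22; 18; 23; 19; 20; 16; 21; 17];
  [:: 0; 1; 6; 7; 3; 2; 5; 4; 14; 12; 10; 8; 15; 13; 11; 9; 22; 20; 18; 16; 23; 21; 19; 17];
  [:: 0; 1; 7; 6; 2; 3; 5; 4; 11; 9; 15; 13; 10; 8; 14; 12; 19; 17; 23; 21; 18; 16; 22; 20];
  [:: 0; 1; 4; 5; 6; 7; 2; 3; 8; 12; 9; 13; 10; 14; 11; 15; 16; 20; 17; 21; 18; 22; 19; 23];
  [:: 0; 1; 2; 3; 6; 7; 5; 4; 10; 8; 11; 9; 14; 12; 15; 13; 18; 16; 19; 17; 22; 20; 23; 21];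
  [:: 0; 1; 2; 3; 6; 7; 5; 4; 10; 8; 11; 9; 14; 12; 15; 13; 18; 16; 19; 17; 22; 20; 23; 21];
  [:: 0; 1; 2; 3; 7; 6; 4; 5; 9; 11; 8; 10; 13; 15; 12; 14; 17; 19; 16; 18; 21; 23; 20; 22];
  [:: 0; 1; 2; 3; 7; 6; 4; 5; 9; 11; 8; 10; 13; 15; 12; 14; 17; 19; 16; 18; 21; 23; 20; 22];
  [:: 0; 1; 3; 2; 6; 7; 4; 5; 12; 14; 13; 15; 8; 10; 9; 11; 20; 22; 21; 23; 16; 18; 17; 19];
  [:: 0; 1; 3; 2; 6; 7; 4; 5; 12; 14; 13; 15; 8; 10; 9; 11; 20; 22; 21; 23; 16; 18; 17; 19];
  [:: 0; 1; 3; 2; 7; 6; 5; 4; 15; 13; 14; 12; 11; 9; 10; 8; 23; 21; 22; 20; 19; 17; 18; 16];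
  [:: 0; 1; 3; 2; 7; 6; 5; 4; 15; 13; 14; 12; 11; 9; 10; 8; 23; 21; 22; 20; 19; 17; 18; 16];
  [:: 0; 1; 6; 7; 5; 4; 2; 3; 10; 14; 8; 12; 11; 15; 9; 13; 18; 22; 16; 20; 19; 23; 17; 21];
  [:: 0; 1; 4; 5; 2; 3; 7; 6; 9; 8; 13; 12; 11; 10; 15; 14; 17; 16; 21; 20; 19; 18; 23; 22];
  [:: 0; 1; 5; 4; 3; 2; 7; 6; 15; 14; 11; 10; 13; 12; 9; 8; 23; 22; 19; 18; 21; 20; 17; 16];
  [:: 0; 1; 7; 6; 5; 4; 3; 2; 15; 11; 13; 9; 14; 10; 12; 8; 23; 19; 21; 17; 22; 18; 20; 16];
  [:: 0; 1; 4; 5; 3; 2; 6; 7; 12; 13; 8; 9; 14; 15; 10; 11; 20; 21; 16; 17; 22; 23; 18; 19];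
  [:: 0; 1; 7; 6; 4; 5; 2; 3; 9; 13; 11; 15; 8; 12; 10; 14; 17; 21; 19; 23; 16; 20; 18; 22];
  [:: 0; 1; 6; 7; 4; 5; 3; 2; 12; 8; 14; 10; 13; 9; 15; 11; 20; 16; 22; 18; 21; 17; 23; 19];
  [:: 0; 1; 5; 4; 2; 3; 6; 7; 10; 11; 14; 15; 8; 9; 12; 13; 18; 19; 22; 23; 16; 17; 20; 21];
  [:: 0; 1; 5; 4; 2; 3; 6; 7; 10; 11; 14; 15; 8; 9; 12; 13; 18; 19; 22; 23; 16; 17; 20; 21];
  [:: 0; 1; 6; 7; 4; 5; 3; 2; 12; 8; 14; 10; 13; 9; 15; 11; 20; 16; 22; 18; 21; 17; 23; 19];
  [:: 0; 1; 7; 6; 4; 5; 2; 3; 9; 13; 11; 15; 8; 12; 10; 14; 17; 21; 19; 23; 16; 20; 18; 22];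
  [:: 0; 1; 4; 5; 3; 2; 6; 7; 12; 13; 8; 9; 14; 15; 10; 11; 20; 21; 16; 17; 22; 23; 18; 19];
  [:: 0; 1; 7; 6; 5; 4; 3; 2; 15; 11; 13; 9; 14; 10; 12; 8; 23; 19; 21; 17; 22; 18; 20; 16];
  [:: 0; 1; 5; 4; 3; 2; 7; 6; 15; 14; 11; 10; 13; 12; 9; 8; 23; 22; 19; 18; 21; 20; 17; 16];
  [:: 0; 1; 4; 5; 2; 3; 7; 6; 9; 8; 13; 12; 11; 10; 15; 14; 17; 16; 21; 20; 19; 18; 23; 22];
  [:: 0; 1; 6; 7; 5; 4; 2; 3; 10; 14; 8; 12; 11; 15; 9; 13; 18; 22; 16; 20; 19; 23; 17; 21]].
Definition MS : seq (seq nat) := [:: [:: 0; 1; 9; 14; 17; 22];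
  [:: 0; 1; 8; 15; 16; 23];
  [:: 0; 1; 11; 12; 19; 20];
  [:: 0; 1; 2; 3; 4; 5; 6; 7];
  [:: 0; 1; 10; 13; 18; 21]].

Definition scale2 (x : Q) : Q := let: (a, b, c, d) := x in (a *+ 2, b *+ 2, c *+ 2, d *+ 2).
Definition q0 : Q := (0, 0, 0, 0).
Definition gq k := nth q0 Gl k.
Definition mt k l := nth 0%N (nth [::] MT k) l.
Definition inv k := nth 0%N INV k.
Definition ta k : int := (gq k).1.1.1.
Definition cj u k := nth 0%N (nth [::] CJ u) k.
Definition I24 := iota 0 24.

Definition check_mt := all (fun k => all (fun l => (mt k l < 24)%N && (hm (gq k) (gq l) == scale2 (gq (mt k l)))) I24) I24.
Definition check_inv := all (fun k => (inv k < 24)%N && (mt k (inv k) == 0%N)) I24.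
Definition check_cj := all (fun u => all (fun k => (cj u k < 24)%N &&
   (hm (nth q0 Ul u) (gq k) == hm (gq (cj u k)) (nth q0 Ul u))) I24) (iota 0 (size Ul)).
Definition check_inj := all (fun k => all (fun l => (ta (mt k (inv l)) == 2) ==> (k == l)) I24) I24.

Definition itr := (nat * nat * nat)%type.
Definition validt (t : itr) := let: (a, b, c) := t in [&& (a < 24)%N, (b < 24)%N & (c < 24)%N].
Definition gens (t : itr) := let: (a, b, c) := t in [:: a; b; c; inv a; inv b; inv c].
Definition bget (S : seq bool) k := nth false S k.
Definition gstep (t : itr) (S : seq bool) := let: (a, b, c) := t in
  [seq bget S k || has (fun g => bget S (mt (inv g) k)) [:: a; b; c] | k <- I24].
Definition binit := [seq eqn k 0 | k <- I24].
Fixpoint clo t n S := if all id S then true else if n is n'.+1 then clo t n' (gstep t S) else false.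
Definition fullgen t := clo t 7 binit.
Definition ingroup (t : itr) := let: (a, b, c) := t in has (fun H => [&& has (eqn a) H, has (eqn b) H & has (eqn c) H]) MS.
Definition genb t := ~~ ingroup t.
Definition check_MS := all (fun H => [&& 0%N \in H, all (fun a => all (fun b => mt a b \in H) H) H,
    all (fun a => inv a \in H) H & ~~ all (fun k => k \in H) I24]) MS.

Definition om1 (t : itr) : itr := let: (a, b, c) := t in (b, mt (mt b a) (inv b), c).
Definition om2 (t : itr) : itr := let: (a, b, c) := t in (a, c, mt (mt c b) (inv c)).
Definition om3 (t : itr) : itr := let: (a, b, c) := t in (a, b, inv (mt (mt c b) a)).
Definition neg k := mt k 1.
Definition sgnk (e : bool) k := if e then neg k else k.
Definition sgnt (e1 e2 e3 : bool) (t : itr) : itr := let: (a, b, c) := t in (sgnk e1 a, sgnk e2 b, sgnk e3 c).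
Definition B2 := [:: false; true].
Definition stepimgs t := [:: om1 t; om2 t; om3 t] ++
  flatten [seq [seq sgnt e1 e2 e3 t | e2 <- B2, e3 <- B2] | e1 <- B2].
Definition cjt u (t : itr) : itr := let: (a, b, c) := t in (cj u a, cj u b, cj u c).
Definition ltt (s t : itr) : bool := let: (a, b, c) := s in let: (a', b', c') := t in
  (a < a')%N || (eqn a a' && ((b < b')%N || (eqn b b' && (c < c')%N))).
Definition eqt (s t : itr) : bool := let: (a, b, c) := s in let: (a', b', c') := t in
  [&& eqn a a', eqn b b' & eqn c c'].
Definition memt x (l : seq itr) := has (eqt x) l.
Fixpoint undupt (l : seq itr) := if l is x :: l' then (if memt x l' then undupt l' else x :: undupt l') else [::].
Definition canon t := foldl (fun m u => let s := cjt u t in if ltt s m then s else m) t (iota 0 (size Ul)).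
Definition good (r s : itr) := [&& validt s, fullgen s, validt (canon s) & fullgen (canon s)].
Fixpoint bfs (n : nat) (seen front : seq itr) : seq itr :=
  if n is n'.+1 then
    let nw := undupt [seq canon s | s <- flatten [seq [seq s | s <- stepimgs r & good r s] | r <- front]] in
    let nw' := [seq x <- nw | ~~ memt x seen] in
    bfs n' (seen ++ nw') nw'
  else seen.
Definition reach r := bfs 9 [:: r] [:: r].
Definition roots : seq itr := [:: (0,2,8); (0,8,11); (8,8,9); (8,9,12); (2,8,8); (2,2,8)]%N.
Definition iblocks := map reach roots.
Inductive trie := Leaf of nat | Node of seq trie.
Fixpoint lookup (v : seq nat) (t : trie) : nat :=
  match t, v with
  | Leaf n, _ => n
  | Node l, x :: v' => lookup v' (nth (Leaf 6) l x)
  | Node _, [::] => 6%N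
  end.
Definition TR : trie := Node [:: Node [:: Leaf 6; Node [:: Leaf 6; Node [:: Leaf 6; Leaf 6; Leaf 6; Node [:: Leaf 6; Leaf 6; Leaf 6; Node [:: Leaf 6; Leaf 6; Node [:: Leaf 6; Leaf 6; Node [:: Leaf 6; Leaf 6; Leaf 0; Leaf 6; Leaf 6]; Leaf 6; Leaf 6]; Node [:: Leaf 6; Node [:: Leaf 6; Leaf 1; Leaf 6; Leaf 6; Leaf 6]; Leaf 6; Leaf 6; Leaf 6]; Leaf 6]; Leaf 6]; Leaf 6]; Node [:: Leaf 6; Leaf 6; Leaf 6; Node [:: Leaf 6; Leaf 6; Node [:: Leaf 6; Node [:: Leaf 6; Leaf 6; Leaf 6; Node [:: Leaf 6; Leaf 6; Leaf 6; Leaf 0; Leaf 6]; Leaf 6]; Leaf 6; Node [:: Leaf 6; Node [:: Leaf 6; Leaf 0; Leaf 6; Leaf 6; Leaf 6]; Leaf 6; Leaf 6; Leaf 6]; Leaf 6]; Leaf 6; Leaf 6]; Leaf 6]; Node [:: Leaf 6; Leaf 6; Leaf 6; Node [:: Leaf 6; Node [:: Leaf 6; Node [:: Leaf 6; Leaf 6; Leaf 6; Node [:: Leaf 6; Leaf 6; Leaf 6; Leaf 1; Leaf 6]; Leaf 6]; Node [:: Leaf 6; Leaf 6; Node [:: Leaf 6; Leaf 6; Leaf 0; Leaf 6; Leaf 6]; Leaf 6; Leaf 6]; Leaf 6; Leaf 6]; Leaf 6; Leaf 6; Leaf 6]; Leaf 6]; Leaf 6]; Node [:: Leaf 6; Node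 [:: Leaf 6; Leaf 6; Node [:: Leaf 6; Leaf 6; Leaf 6; Node [:: Leaf 6; Node [:: Leaf 6; Leaf 6; Leaf 6; Node [:: Leaf 6; Leaf 6; Leaf 6; Leaf 0; Leaf 6]; Leaf 6]; Leaf 6; Node [:: Leaf 6; Node [:: Leaf 6; Leaf 0; Leaf 6; Leaf 6; Leaf 6]; Leaf 6; Leaf 6; Leaf 6]; Leaf 6]; Leaf 6]; Leaf 6; Leaf 6]; Leaf 6; Node [:: Leaf 6; Leaf 6; Node [:: Leaf 6; Node [:: Leaf 6; Node [:: Leaf 6; Leaf 6; Leaf 6; Node [:: Leaf 6; Leaf 6; Leaf 6; Leaf 0; Leaf 6]; Leaf 6]; Leaf 6; Node [:: Leaf 6; Node [:: Leaf 6; Leaf 0; Leaf 6; Leaf 6; Leaf 6]; Leaf 6; Leaf 6; Leaf 6]; Leaf 6]; Leaf 6; Leaf 6; Leaf 6]; Leaf 6; Leaf 6]; Leaf 6]; Node [:: Leaf 6; Node [:: Leaf 6; Node [:: Leaf 6; Leaf 6; Leaf 6; Node [:: Leaf 6; Node [:: Leaf 6; Leaf 6; Leaf 6; Node [:: Leaf 6; Leaf 6; Leaf 6; Leaf 1; Leaf 6]; Leaf 6]; Node [:: Leaf 6; Leaf 6; Node [:: Leaf 6; Leaf 6; Leaf 0; Leaf 6; Leaf 6]; Leaf 6; Leaf 6]; Leaf 6; Leaf 6]; Leaf 6]; Leaf 6; Leaf 6; Leaf 6]; Node [:: Leaf 6; Node [:: Leaf 6; Leaf 6; Node [:: Leaf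 6; Node [:: Leaf 6; Leaf 6; Leaf 6; Node [:: Leaf 6; Leaf 6; Leaf 6; Leaf 0; Leaf 6]; Leaf 6]; Leaf 6; Node [:: Leaf 6; Node [:: Leaf 6; Leaf 0; Leaf 6; Leaf 6; Leaf 6]; Leaf 6; Leaf 6; Leaf 6]; Leaf 6]; Leaf 6; Leaf 6]; Leaf 6; Leaf 6; Leaf 6]; Node [:: Leaf 6; Node [:: Leaf 6; Node [:: Leaf 6; Leaf 6; Node [:: Leaf 6; Leaf 6; Node [:: Leaf 6; Leaf 6; Leaf 0; Leaf 6; Leaf 6]; Leaf 6; Leaf 6]; Node [:: Leaf 6; Node [:: Leaf 6; Leaf 1; Leaf 6; Leaf 6; Leaf 6]; Leaf 6; Leaf 6; Leaf 6]; Leaf 6]; Leaf 6; Leaf 6; Leaf 6]; Leaf 6; Leaf 6; Leaf 6]; Leaf 6]; Leaf 6]; Node [:: Node [:: Leaf 6; Node [:: Leaf 6; Leaf 6; Leaf 6; Node [:: Leaf 6; Leaf 6; Node [:: Leaf 6; Leaf 6; Leaf 6; Node [:: Leaf 6; Leaf 6; Node [:: Leaf 6; Leaf 6; Leaf 0; Leaf 6; Leaf 6]; Leaf 6; Leaf 6]; Leaf 6]; Node [:: Leaf 6; Leaf 6; Leaf 6; Node [:: Leaf 6; Node [:: Leaf 6; Leaf 1; Leaf 6; Leaf 6; Leaf 6]; Leaf 6; Leaf 6; Leaf 6]; Leaf 6]; Leaf 6]; Leaf 6]; Node [:: Leaf 6; Leaf 6; Leaf 6; Node [:: Leaf 6;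 Node [:: Leaf 6; Leaf 6; Node [:: Leaf 6; Leaf 6; Leaf 6; Node [:: Leaf 6; Leaf 6; Leaf 6; Leaf 0; Leaf 6]; Leaf 6]; Leaf 6; Leaf 6]; Leaf 6; Node [:: Leaf 6; Leaf 6; Node [:: Leaf 6; Node [:: Leaf 6; Leaf 0; Leaf 6; Leaf 6; Leaf 6]; Leaf 6; Leaf 6; Leaf 6]; Leaf 6; Leaf 6]; Leaf 6]; Leaf 6]; Node [:: Leaf 6; Leaf 6; Leaf 6; Node [:: Leaf 6; Node [:: Leaf 6; Node [:: Leaf 6; Leaf 6; Leaf 6; Node [:: Leaf 6; Leaf 6; Leaf 6; Leaf 1; Leaf 6]; Leaf 6]; Leaf 6; Leaf 6; Leaf 6]; Node [:: Leaf 6; Node [:: Leaf 6; Leaf 6; Node [:: Leaf 6; Leaf 6; Leaf 0; Leaf 6; Leaf 6]; Leaf 6; Leaf 6]; Leaf 6; Leaf 6; Leaf 6]; Leaf 6; Leaf 6]; Leaf 6]; Leaf 6]; Node [:: Node [:: Leaf 6; Leaf 6; Node [:: Leaf 6; Leaf 6; Leaf 6; Node [:: Leaf 6; Leaf 6; Leaf 6; Node [:: Leaf 6; Leaf 6; Node [:: Leaf 6; Leaf 6; Leaf 0; Leaf 6; Leaf 6]; Leaf 6; Leaf 6]; Leaf 6]; Leaf 6]; Node [:: Leaf 6; Leaf 6; Leaf 6; Node [:: Leaf 6; Leaf 6; Leaf 6; Node [:: Leaf 6; Node [:: Leaf 6; Leaf 1; Leaf 6; Leaf 6; Leaf 6];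 Leaf 6; Leaf 6; Leaf 6]; Leaf 6]; Leaf 6]; Leaf 6]; Node [:: Leaf 6; Node [:: Leaf 6; Leaf 6; Node [:: Leaf 6; Leaf 6; Node [:: Leaf 6; Leaf 6; Leaf 6; Node [:: Leaf 6; Leaf 6; Leaf 6; Leaf 2; Leaf 6]; Leaf 6]; Leaf 6; Leaf 6]; Node [:: Leaf 6; Leaf 6; Leaf 6; Node [:: Leaf 6; Leaf 6; Node [:: Leaf 6; Leaf 6; Leaf 4; Leaf 6; Leaf 6]; Leaf 6; Leaf 6]; Leaf 6]; Leaf 6]; Node [:: Leaf 6; Node [:: Leaf 6; Leaf 6; Node [:: Leaf 6; Leaf 6; Leaf 6; Node [:: Leaf 6; Leaf 6; Leaf 6; Leaf 2; Leaf 6]; Leaf 6]; Leaf 6; Leaf 6]; Node [:: Leaf 6; Node [:: Leaf 6; Leaf 6; Leaf 6; Node [:: Leaf 6; Leaf 6; Leaf 6; Leaf 2; Leaf 6]; Leaf 6]; Leaf 6; Node [:: Leaf 6; Node [:: Leaf 6; Leaf 6; Leaf 6; Leaf 2; Leaf 6]; Leaf 6; Node [:: Leaf 6; Leaf 3; Leaf 6; Leaf 6; Leaf 6]; Leaf 6]; Leaf 6]; Node [:: Leaf 6; Leaf 6; Node [:: Leaf 6; Node [:: Leaf 6; Leaf 6; Leaf 6; Leaf 2; Leaf 6]; Leaf 6; Node [:: Leaf 6; Leaf 3; Leaf 6; Leaf 6; Leaf 6]; Leaf 6]; Leaf 6; Node [:: Leaf 6; Node [:: Leaf 6; Leaf 3;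 Leaf 6; Leaf 6; Leaf 6]; Leaf 6; Leaf 6; Leaf 6]]; Node [:: Leaf 6; Leaf 6; Leaf 6; Node [:: Leaf 6; Node [:: Leaf 6; Leaf 3; Leaf 6; Leaf 6; Leaf 6]; Leaf 6; Leaf 6; Leaf 6]; Leaf 6]]; Node [:: Leaf 6; Node [:: Leaf 6; Leaf 6; Leaf 6; Node [:: Leaf 6; Leaf 6; Node [:: Leaf 6; Leaf 6; Leaf 4; Leaf 6; Leaf 6]; Leaf 6; Leaf 6]; Leaf 6]; Node [:: Leaf 6; Leaf 6; Node [:: Leaf 6; Node [:: Leaf 6; Leaf 6; Leaf 6; Leaf 2; Leaf 6]; Leaf 6; Node [:: Leaf 6; Leaf 3; Leaf 6; Leaf 6; Leaf 6]; Leaf 6]; Leaf 6; Node [:: Leaf 6; Node [:: Leaf 6; Leaf 3; Leaf 6; Leaf 6; Leaf 6]; Leaf 6; Leaf 6; Leaf 6]]; Node [:: Leaf 6; Node [:: Leaf 6; Leaf 6; Node [:: Leaf 6; Leaf 6; Leaf 4; Leaf 6; Leaf 6]; Leaf 6; Leaf 6]; Leaf 6; Node [:: Node [:: Leaf 6; Leaf 6; Leaf 4; Leaf 6; Leaf 6]; Leaf 6; Node [:: Leaf 1; Leaf 6; Leaf 6; Leaf 6; Leaf 6]; Leaf 6; Leaf 6]; Leaf 6]; Node [:: Leaf 6; Leaf 6; Node [:: Leaf 6; Node [:: Leaf 6; Leaf 3; Leaf 6; Leaf 6; Leaf 6]; Leaf 6; Leaf 6; Leaf 6]; Leaf 6;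 Leaf 6]]; Node [:: Leaf 6; Leaf 6; Node [:: Leaf 6; Leaf 6; Leaf 6; Node [:: Leaf 6; Node [:: Leaf 6; Leaf 3; Leaf 6; Leaf 6; Leaf 6]; Leaf 6; Leaf 6; Leaf 6]; Leaf 6]; Node [:: Leaf 6; Leaf 6; Node [:: Leaf 6; Node [:: Leaf 6; Leaf 3; Leaf 6; Leaf 6; Leaf 6]; Leaf 6; Leaf 6; Leaf 6]; Leaf 6; Leaf 6]; Leaf 6]]; Node [:: Leaf 6; Node [:: Leaf 6; Node [:: Leaf 6; Node [:: Leaf 6; Leaf 6; Leaf 6; Node [:: Leaf 6; Leaf 6; Leaf 6; Leaf 4; Leaf 6]; Leaf 6]; Leaf 6; Leaf 6; Leaf 6]; Leaf 6; Node [:: Leaf 6; Leaf 6; Leaf 6; Node [:: Leaf 6; Node [:: Leaf 6; Leaf 4; Leaf 6; Leaf 6; Leaf 6]; Leaf 6; Leaf 6; Leaf 6]; Leaf 6]; Leaf 6]; Node [:: Leaf 6; Node [:: Leaf 6; Node [:: Leaf 6; Leaf 6; Node [:: Leaf 6; Leaf 6; Leaf 6; Leaf 6; Leaf 0]; Leaf 6; Node [:: Leaf 6; Leaf 6; Leaf 5; Leaf 6; Leaf 6]]; Leaf 6; Node [:: Leaf 6; Leaf 6; Node [:: Leaf 6; Leaf 6; Leaf 5; Leaf 6; Leaf 6]; Leaf 6; Leaf 6]; Leaf 6]; Leaf 6; Node [:: Leaf 6; Node [:: Leaf 6; Leaf 6; Node [:: Leaf 6; Leaf 6; Leaf 5;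 Leaf 6; Leaf 6]; Leaf 6; Leaf 6]; Leaf 6; Node [:: Node [:: Leaf 6; Leaf 6; Leaf 5; Leaf 6; Leaf 6]; Leaf 6; Node [:: Leaf 0; Leaf 6; Leaf 6; Leaf 6; Leaf 6]; Leaf 6; Leaf 6]; Leaf 6]; Leaf 6]; Node [:: Leaf 6; Node [:: Leaf 6; Node [:: Leaf 6; Leaf 6; Leaf 6; Node [:: Leaf 6; Leaf 6; Leaf 6; Leaf 4; Leaf 6]; Leaf 6]; Leaf 6; Node [:: Leaf 6; Node [:: Leaf 6; Leaf 6; Leaf 6; Leaf 4; Leaf 6]; Leaf 6; Node [:: Leaf 6; Leaf 4; Leaf 6; Leaf 6; Leaf 6]; Leaf 6]; Leaf 6]; Leaf 6; Node [:: Leaf 6; Node [:: Leaf 6; Node [:: Leaf 6; Leaf 6; Leaf 6; Leaf 4; Leaf 6]; Leaf 6; Node [:: Leaf 6; Leaf 4; Leaf 6; Leaf 6; Leaf 6]; Leaf 6]; Leaf 6; Node [:: Leaf 6; Node [:: Leaf 6; Leaf 4; Leaf 6; Leaf 6; Leaf 6]; Leaf 6; Leaf 6; Leaf 6]; Leaf 6]; Leaf 6]; Node [:: Leaf 6; Node [:: Leaf 6; Leaf 6; Leaf 6; Node [:: Leaf 6; Leaf 6; Node [:: Leaf 6; Leaf 6; Leaf 5; Leaf 6; Leaf 6]; Leaf 6; Leaf 6]; Leaf 6]; Leaf 6; Node [:: Leaf 6; Node [:: Leaf 6; Leaf 6; Node [:: Leaf 6; Leaf 6; Leaf 5; Leaf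 6; Leaf 6]; Leaf 6; Leaf 6]; Leaf 6; Leaf 6; Leaf 6]; Leaf 6]]; Node [:: Leaf 6; Node [:: Leaf 6; Node [:: Leaf 6; Node [:: Leaf 6; Leaf 6; Node [:: Leaf 6; Leaf 6; Leaf 4; Leaf 6; Leaf 6]; Leaf 6; Leaf 6]; Leaf 6; Leaf 6; Leaf 6]; Node [:: Leaf 6; Leaf 6; Node [:: Leaf 6; Node [:: Leaf 6; Leaf 2; Leaf 6; Leaf 6; Leaf 6]; Leaf 6; Leaf 6; Leaf 6]; Leaf 6; Leaf 6]; Leaf 6; Leaf 6]; Node [:: Node [:: Leaf 6; Node [:: Leaf 6; Leaf 6; Leaf 6; Node [:: Leaf 6; Leaf 6; Leaf 6; Leaf 3; Leaf 6]; Leaf 6]; Leaf 6; Leaf 6; Leaf 6]; Node [:: Node [:: Leaf 6; Leaf 6; Leaf 6; Node [:: Leaf 6; Leaf 6; Leaf 6; Leaf 3; Leaf 6]; Leaf 6]; Leaf 6; Node [:: Leaf 6; Node [:: Leaf 6; Leaf 6; Leaf 6; Leaf 3; Leaf 6]; Leaf 6; Node [:: Leaf 6; Leaf 2; Leaf 6; Leaf 6; Leaf 6]; Leaf 6]; Leaf 6; Leaf 6]; Node [:: Leaf 6; Node [:: Leaf 6; Node [:: Leaf 6; Leaf 6; Leaf 6; Leaf 3; Leaf 6]; Leaf 6; Node [:: Leaf 6; Leaf 2; Leaf 6; Leaf 6; Leaf 6]; Leaf 6]; Leaf 6; Node [:: Leaf 6; Node [:: Leaf 6; Leaf 2; Leaf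 6; Leaf 6; Leaf 6]; Leaf 6; Leaf 6; Leaf 6]; Leaf 6]; Node [:: Leaf 6; Leaf 6; Node [:: Leaf 6; Node [:: Leaf 6; Leaf 2; Leaf 6; Leaf 6; Leaf 6]; Leaf 6; Leaf 6; Leaf 6]; Leaf 6; Leaf 6]; Leaf 6]; Node [:: Node [:: Leaf 6; Leaf 6; Node [:: Leaf 6; Leaf 6; Leaf 6; Node [:: Leaf 6; Leaf 6; Leaf 6; Leaf 3; Leaf 6]; Leaf 6]; Leaf 6; Leaf 6]; Node [:: Leaf 6; Node [:: Leaf 6; Leaf 6; Node [:: Leaf 6; Leaf 6; Leaf 6; Leaf 6; Leaf 1]; Leaf 6; Node [:: Leaf 6; Leaf 6; Leaf 4; Leaf 6; Leaf 6]]; Leaf 6; Node [:: Leaf 6; Leaf 6; Node [:: Leaf 6; Leaf 6; Leaf 4; Leaf 6; Leaf 6]; Leaf 6; Leaf 6]; Leaf 6]; Node [:: Node [:: Leaf 6; Leaf 6; Leaf 6; Node [:: Leaf 6; Leaf 6; Leaf 6; Leaf 3; Leaf 6]; Leaf 6]; Leaf 6; Node [:: Leaf 6; Node [:: Leaf 6; Leaf 6; Leaf 6; Leaf 3; Leaf 6]; Leaf 6; Node [:: Leaf 6; Leaf 2; Leaf 6; Leaf 6; Leaf 6]; Leaf 6]; Leaf 6; Leaf 6]; Node [:: Leaf 6; Node [:: Leaf 6; Leaf 6; Node [:: Leaf 6; Leaf 6; Leaf 4; Leaf 6; Leaf 6]; Leaf 6; Leaf 6]; Leaf 6; Leaf 6;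 Leaf 6]; Leaf 6]; Node [:: Leaf 6; Node [:: Leaf 6; Leaf 6; Node [:: Leaf 6; Leaf 6; Leaf 6; Node [:: Leaf 6; Leaf 6; Leaf 6; Leaf 3; Leaf 6]; Leaf 6]; Leaf 6; Leaf 6]; Node [:: Leaf 6; Node [:: Leaf 6; Leaf 6; Leaf 6; Node [:: Leaf 6; Leaf 6; Leaf 6; Leaf 3; Leaf 6]; Leaf 6]; Leaf 6; Leaf 6; Leaf 6]; Leaf 6; Leaf 6]]; Node [:: Leaf 6; Leaf 6; Node [:: Leaf 6; Node [:: Leaf 6; Node [:: Leaf 6; Leaf 6; Node [:: Leaf 6; Leaf 6; Leaf 0; Leaf 6; Leaf 6]; Leaf 6; Leaf 6]; Leaf 6; Leaf 6; Leaf 6]; Leaf 6; Leaf 6; Leaf 6]; Node [:: Leaf 6; Node [:: Leaf 6; Node [:: Leaf 6; Leaf 6; Leaf 6; Node [:: Leaf 6; Leaf 6; Leaf 6; Leaf 1; Leaf 6]; Leaf 6]; Leaf 6; Leaf 6; Leaf 6]; Leaf 6; Leaf 6; Leaf 6]; Leaf 6]]; Node [:: Node [:: Leaf 6; Node [:: Leaf 6; Leaf 6; Leaf 6; Node [:: Leaf 6; Leaf 6; Node [:: Leaf 6; Leaf 6; Leaf 6; Node [:: Leaf 6; Leaf 6; Leaf 6; Leaf 0; Leaf 6]; Leaf 6]; Leaf 6; Leaf 6]; Leaf 6]; Leaf 6; Node [:: Leaf 6; Leaf 6; Leaf 6; Node [:: Leaf 6; Leaf 6; Node [:: Leaf 6;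 Node [:: Leaf 6; Leaf 0; Leaf 6; Leaf 6; Leaf 6]; Leaf 6; Leaf 6; Leaf 6]; Leaf 6; Leaf 6]; Leaf 6]; Leaf 6]; Node [:: Leaf 6; Node [:: Leaf 6; Node [:: Leaf 6; Node [:: Leaf 6; Leaf 6; Leaf 6; Node [:: Leaf 6; Leaf 6; Leaf 6; Leaf 4; Leaf 6]; Leaf 6]; Leaf 6; Leaf 6; Leaf 6]; Node [:: Leaf 6; Node [:: Leaf 6; Leaf 6; Node [:: Leaf 6; Leaf 6; Leaf 6; Leaf 6; Leaf 0]; Leaf 6; Node [:: Leaf 6; Leaf 6; Leaf 5; Leaf 6; Leaf 6]]; Leaf 6; Node [:: Leaf 6; Leaf 6; Node [:: Leaf 6; Leaf 6; Leaf 5; Leaf 6; Leaf 6]; Leaf 6; Leaf 6]; Leaf 6]; Node [:: Leaf 6; Node [:: Leaf 6; Leaf 6; Leaf 6; Node [:: Leaf 6; Leaf 6; Leaf 6; Leaf 4; Leaf 6]; Leaf 6]; Leaf 6; Node [:: Leaf 6; Node [:: Leaf 6; Leaf 6; Leaf 6; Leaf 4; Leaf 6]; Leaf 6; Node [:: Leaf 6; Leaf 4; Leaf 6; Leaf 6; Leaf 6]; Leaf 6]; Leaf 6]; Node [:: Leaf 6; Leaf 6; Leaf 6; Node [:: Leaf 6; Leaf 6; Node [:: Leaf 6; Leaf 6; Leaf 5; Leaf 6; Leaf 6]; Leaf 6; Leaf 6]; Leaf 6]]; Leaf 6; Node [:: Leaf 6; Node [:: Leaf 6; Leaf 6; Leaf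 6; Node [:: Leaf 6; Node [:: Leaf 6; Leaf 4; Leaf 6; Leaf 6; Leaf 6]; Leaf 6; Leaf 6; Leaf 6]; Leaf 6]; Node [:: Leaf 6; Node [:: Leaf 6; Leaf 6; Node [:: Leaf 6; Leaf 6; Leaf 5; Leaf 6; Leaf 6]; Leaf 6; Leaf 6]; Leaf 6; Node [:: Node [:: Leaf 6; Leaf 6; Leaf 5; Leaf 6; Leaf 6]; Leaf 6; Node [:: Leaf 0; Leaf 6; Leaf 6; Leaf 6; Leaf 6]; Leaf 6; Leaf 6]; Leaf 6]; Node [:: Leaf 6; Node [:: Leaf 6; Node [:: Leaf 6; Leaf 6; Leaf 6; Leaf 4; Leaf 6]; Leaf 6; Node [:: Leaf 6; Leaf 4; Leaf 6; Leaf 6; Leaf 6]; Leaf 6]; Leaf 6; Node [:: Leaf 6; Node [:: Leaf 6; Leaf 4; Leaf 6; Leaf 6; Leaf 6]; Leaf 6; Leaf 6; Leaf 6]; Leaf 6]; Node [:: Leaf 6; Node [:: Leaf 6; Leaf 6; Node [:: Leaf 6; Leaf 6; Leaf 5; Leaf 6; Leaf 6]; Leaf 6; Leaf 6]; Leaf 6; Leaf 6; Leaf 6]]; Leaf 6]; Node [:: Leaf 6; Node [:: Leaf 6; Node [:: Node [:: Leaf 6; Leaf 6; Leaf 6; Node [:: Leaf 6; Leaf 6; Leaf 6; Leaf 5; Leaf 6]; Leaf 6]; Leaf 6; Node [:: Leaf 6; Node [:: Leaf 6; Leaf 6; Leaf 6; Leaf 5; Leaf 6]; Leaf 6; Node [::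 Leaf 6; Leaf 5; Leaf 6; Leaf 6; Leaf 6]; Leaf 6]; Leaf 6; Leaf 6]; Leaf 6; Node [:: Leaf 6; Leaf 6; Node [:: Leaf 6; Node [:: Leaf 6; Leaf 6; Leaf 6; Leaf 5; Leaf 6]; Leaf 6; Node [:: Leaf 6; Leaf 5; Leaf 6; Leaf 6; Leaf 6]; Leaf 6]; Leaf 6; Node [:: Leaf 6; Node [:: Leaf 6; Leaf 5; Leaf 6; Leaf 6; Leaf 6]; Leaf 6; Leaf 6; Leaf 6]]; Leaf 6]; Leaf 6; Node [:: Leaf 6; Node [:: Leaf 6; Leaf 6; Node [:: Leaf 6; Node [:: Leaf 6; Leaf 6; Leaf 6; Leaf 5; Leaf 6]; Leaf 6; Node [:: Leaf 6; Leaf 5; Leaf 6; Leaf 6; Leaf 6]; Leaf 6]; Leaf 6; Node [:: Leaf 6; Node [:: Leaf 6; Leaf 5; Leaf 6; Leaf 6; Leaf 6]; Leaf 6; Leaf 6; Leaf 6]]; Leaf 6; Node [:: Node [:: Leaf 6; Leaf 6; Leaf 6; Node [:: Leaf 6; Leaf 6; Leaf 6; Leaf 5; Leaf 6]; Leaf 6]; Leaf 6; Node [:: Leaf 6; Node [:: Leaf 6; Leaf 6; Leaf 6; Leaf 5; Leaf 6]; Leaf 6; Node [:: Leaf 6; Leaf 5; Leaf 6; Leaf 6; Leaf 6]; Leaf 6]; Leaf 6; Leaf 6]; Leaf 6]; Leaf 6]; Node [:: Leaf 6; Node [:: Node [:: Leaf 6; Node [:: Leaf 6; Leaf 6; Node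 [:: Leaf 6; Leaf 6; Leaf 5; Leaf 6; Leaf 6]; Leaf 6; Leaf 6]; Leaf 6; Leaf 6; Leaf 6]; Node [:: Leaf 6; Node [:: Leaf 6; Node [:: Leaf 6; Leaf 6; Leaf 6; Leaf 4; Leaf 6]; Leaf 6; Node [:: Leaf 6; Leaf 4; Leaf 6; Leaf 6; Leaf 6]; Leaf 6]; Leaf 6; Node [:: Leaf 6; Node [:: Leaf 6; Leaf 4; Leaf 6; Leaf 6; Leaf 6]; Leaf 6; Leaf 6; Leaf 6]; Leaf 6]; Node [:: Leaf 6; Node [:: Leaf 6; Leaf 6; Node [:: Leaf 6; Leaf 6; Leaf 5; Leaf 6; Leaf 6]; Leaf 6; Leaf 6]; Leaf 6; Node [:: Node [:: Leaf 6; Leaf 6; Leaf 5; Leaf 6; Leaf 6]; Leaf 6; Node [:: Leaf 0; Leaf 6; Leaf 6; Leaf 6; Leaf 6]; Leaf 6; Leaf 6]; Leaf 6]; Node [:: Leaf 6; Leaf 6; Leaf 6; Node [:: Leaf 6; Node [:: Leaf 6; Leaf 4; Leaf 6; Leaf 6; Leaf 6]; Leaf 6; Leaf 6; Leaf 6]; Leaf 6]; Leaf 6]; Leaf 6; Node [:: Node [:: Leaf 6; Leaf 6; Leaf 6; Node [:: Leaf 6; Leaf 6; Node [:: Leaf 6; Leaf 6; Leaf 5; Leaf 6; Leaf 6]; Leaf 6; Leaf 6]; Leaf 6]; Node [:: Leaf 6; Node [:: Leaf 6; Leaf 6; Leaf 6; Node [:: Leaf 6; Leaf 6; Leaf 6;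 Leaf 4; Leaf 6]; Leaf 6]; Leaf 6; Node [:: Leaf 6; Node [:: Leaf 6; Leaf 6; Leaf 6; Leaf 4; Leaf 6]; Leaf 6; Node [:: Leaf 6; Leaf 4; Leaf 6; Leaf 6; Leaf 6]; Leaf 6]; Leaf 6]; Node [:: Leaf 6; Node [:: Leaf 6; Leaf 6; Node [:: Leaf 6; Leaf 6; Leaf 6; Leaf 6; Leaf 0]; Leaf 6; Node [:: Leaf 6; Leaf 6; Leaf 5; Leaf 6; Leaf 6]]; Leaf 6; Node [:: Leaf 6; Leaf 6; Node [:: Leaf 6; Leaf 6; Leaf 5; Leaf 6; Leaf 6]; Leaf 6; Leaf 6]; Leaf 6]; Node [:: Leaf 6; Node [:: Leaf 6; Leaf 6; Leaf 6; Node [:: Leaf 6; Leaf 6; Leaf 6; Leaf 4; Leaf 6]; Leaf 6]; Leaf 6; Leaf 6; Leaf 6]; Leaf 6]; Leaf 6]; Node [:: Leaf 6; Node [:: Leaf 6; Node [:: Leaf 6; Leaf 6; Node [:: Leaf 6; Node [:: Leaf 6; Leaf 0; Leaf 6; Leaf 6; Leaf 6]; Leaf 6; Leaf 6; Leaf 6]; Leaf 6; Leaf 6]; Leaf 6; Leaf 6; Leaf 6]; Leaf 6; Node [:: Leaf 6; Node [:: Leaf 6; Leaf 6; Node [:: Leaf 6; Leaf 6; Leaf 6; Node [:: Leaf 6; Leaf 6; Leaf 6; Leaf 0; Leaf 6]; Leaf 6]; Leaf 6; Leaf 6]; Leaf 6; Leaf 6; Leaf 6]; Leaf 6]]; Node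 [:: Node [:: Leaf 6; Node [:: Leaf 6; Leaf 6; Leaf 6; Node [:: Leaf 6; Node [:: Leaf 6; Leaf 6; Leaf 6; Node [:: Leaf 6; Leaf 6; Leaf 6; Leaf 1; Leaf 6]; Leaf 6]; Leaf 6; Leaf 6; Leaf 6]; Leaf 6]; Node [:: Leaf 6; Leaf 6; Leaf 6; Node [:: Leaf 6; Node [:: Leaf 6; Leaf 6; Node [:: Leaf 6; Leaf 6; Leaf 0; Leaf 6; Leaf 6]; Leaf 6; Leaf 6]; Leaf 6; Leaf 6; Leaf 6]; Leaf 6]; Leaf 6; Leaf 6]; Node [:: Node [:: Leaf 6; Leaf 6; Node [:: Leaf 6; Node [:: Leaf 6; Leaf 6; Leaf 6; Node [:: Leaf 6; Leaf 6; Leaf 6; Leaf 3; Leaf 6]; Leaf 6]; Leaf 6; Leaf 6; Leaf 6]; Node [:: Leaf 6; Leaf 6; Node [:: Leaf 6; Leaf 6; Leaf 6; Node [:: Leaf 6; Leaf 6; Leaf 6; Leaf 3; Leaf 6]; Leaf 6]; Leaf 6; Leaf 6]; Leaf 6]; Node [:: Leaf 6; Node [:: Leaf 6; Node [:: Leaf 6; Leaf 6; Node [:: Leaf 6; Leaf 6; Leaf 4; Leaf 6; Leaf 6]; Leaf 6; Leaf 6]; Leaf 6; Leaf 6; Leaf 6]; Node [:: Node [:: Leaf 6; Leaf 6; Leaf 6; Node [:: Leaf 6; Leaf 6; Leaf 6; Leaf 3; Leaf 6]; Leaf 6]; Leaf 6; Node [:: Leaf 6; Node [:: Leaf 6; Leaf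 6; Leaf 6; Leaf 3; Leaf 6]; Leaf 6; Node [:: Leaf 6; Leaf 2; Leaf 6; Leaf 6; Leaf 6]; Leaf 6]; Leaf 6; Leaf 6]; Node [:: Leaf 6; Node [:: Leaf 6; Leaf 6; Node [:: Leaf 6; Leaf 6; Leaf 6; Leaf 6; Leaf 1]; Leaf 6; Node [:: Leaf 6; Leaf 6; Leaf 4; Leaf 6; Leaf 6]]; Leaf 6; Node [:: Leaf 6; Leaf 6; Node [:: Leaf 6; Leaf 6; Leaf 4; Leaf 6; Leaf 6]; Leaf 6; Leaf 6]; Leaf 6]; Node [:: Leaf 6; Leaf 6; Node [:: Leaf 6; Leaf 6; Leaf 6; Node [:: Leaf 6; Leaf 6; Leaf 6; Leaf 3; Leaf 6]; Leaf 6]; Leaf 6; Leaf 6]]; Node [:: Leaf 6; Node [:: Leaf 6; Leaf 6; Node [:: Leaf 6; Node [:: Leaf 6; Leaf 2; Leaf 6; Leaf 6; Leaf 6]; Leaf 6; Leaf 6; Leaf 6]; Leaf 6; Leaf 6]; Node [:: Leaf 6; Node [:: Leaf 6; Node [:: Leaf 6; Leaf 6; Leaf 6; Leaf 3; Leaf 6]; Leaf 6; Node [:: Leaf 6; Leaf 2; Leaf 6; Leaf 6; Leaf 6]; Leaf 6]; Leaf 6; Node [:: Leaf 6; Node [:: Leaf 6; Leaf 2; Leaf 6; Leaf 6; Leaf 6]; Leaf 6; Leaf 6; Leaf 6]; Leaf 6]; Node [:: Node [:: Leaf 6; Leaf 6; Leaf 6; Node [:: Leaf 6; Leaf 6; Leaf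 6; Leaf 3; Leaf 6]; Leaf 6]; Leaf 6; Node [:: Leaf 6; Node [:: Leaf 6; Leaf 6; Leaf 6; Leaf 3; Leaf 6]; Leaf 6; Node [:: Leaf 6; Leaf 2; Leaf 6; Leaf 6; Leaf 6]; Leaf 6]; Leaf 6; Leaf 6]; Node [:: Leaf 6; Node [:: Leaf 6; Leaf 6; Leaf 6; Node [:: Leaf 6; Leaf 6; Leaf 6; Leaf 3; Leaf 6]; Leaf 6]; Leaf 6; Leaf 6; Leaf 6]]; Node [:: Leaf 6; Leaf 6; Node [:: Leaf 6; Leaf 6; Node [:: Leaf 6; Node [:: Leaf 6; Leaf 2; Leaf 6; Leaf 6; Leaf 6]; Leaf 6; Leaf 6; Leaf 6]; Leaf 6; Leaf 6]; Node [:: Leaf 6; Node [:: Leaf 6; Leaf 6; Node [:: Leaf 6; Leaf 6; Leaf 4; Leaf 6; Leaf 6]; Leaf 6; Leaf 6]; Leaf 6; Leaf 6; Leaf 6]; Leaf 6]; Leaf 6]; Node [:: Node [:: Leaf 6; Node [:: Leaf 6; Node [:: Leaf 6; Leaf 6; Node [:: Leaf 6; Leaf 6; Leaf 5; Leaf 6; Leaf 6]; Leaf 6; Leaf 6]; Leaf 6; Leaf 6; Leaf 6]; Leaf 6; Node [:: Leaf 6; Leaf 6; Leaf 6; Node [:: Leaf 6; Leaf 6; Node [:: Leaf 6; Leaf 6; Leaf 5; Leaf 6; Leaf 6]; Leaf 6; Leaf 6]; Leaf 6]; Leaf 6]; Node [:: Leaf 6; Node [:: Leaf 6; Node [:: Leaf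 6; Node [:: Leaf 6; Leaf 6; Leaf 6; Leaf 4; Leaf 6]; Leaf 6; Node [:: Leaf 6; Leaf 4; Leaf 6; Leaf 6; Leaf 6]; Leaf 6]; Leaf 6; Node [:: Leaf 6; Node [:: Leaf 6; Leaf 4; Leaf 6; Leaf 6; Leaf 6]; Leaf 6; Leaf 6; Leaf 6]; Leaf 6]; Leaf 6; Node [:: Leaf 6; Node [:: Leaf 6; Leaf 6; Leaf 6; Node [:: Leaf 6; Leaf 6; Leaf 6; Leaf 4; Leaf 6]; Leaf 6]; Leaf 6; Node [:: Leaf 6; Node [:: Leaf 6; Leaf 6; Leaf 6; Leaf 4; Leaf 6]; Leaf 6; Node [:: Leaf 6; Leaf 4; Leaf 6; Leaf 6; Leaf 6]; Leaf 6]; Leaf 6]; Leaf 6]; Node [:: Leaf 6; Node [:: Leaf 6; Node [:: Leaf 6; Leaf 6; Node [:: Leaf 6; Leaf 6; Leaf 5; Leaf 6; Leaf 6]; Leaf 6; Leaf 6]; Leaf 6; Node [:: Node [:: Leaf 6; Leaf 6; Leaf 5; Leaf 6; Leaf 6]; Leaf 6; Node [:: Leaf 0; Leaf 6; Leaf 6; Leaf 6; Leaf 6]; Leaf 6; Leaf 6]; Leaf 6]; Leaf 6; Node [:: Leaf 6; Node [:: Leaf 6; Leaf 6; Node [:: Leaf 6; Leaf 6; Leaf 6; Leaf 6; Leaf 0]; Leaf 6; Node [:: Leaf 6; Leaf 6; Leaf 5; Leaf 6; Leaf 6]]; Leaf 6; Node [:: Leaf 6; Leaf 6; Node [:: Leaf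 6; Leaf 6; Leaf 5; Leaf 6; Leaf 6]; Leaf 6; Leaf 6]; Leaf 6]; Leaf 6]; Node [:: Leaf 6; Node [:: Leaf 6; Leaf 6; Leaf 6; Node [:: Leaf 6; Node [:: Leaf 6; Leaf 4; Leaf 6; Leaf 6; Leaf 6]; Leaf 6; Leaf 6; Leaf 6]; Leaf 6]; Leaf 6; Node [:: Leaf 6; Node [:: Leaf 6; Leaf 6; Leaf 6; Node [:: Leaf 6; Leaf 6; Leaf 6; Leaf 4; Leaf 6]; Leaf 6]; Leaf 6; Leaf 6; Leaf 6]; Leaf 6]; Leaf 6]; Node [:: Node [:: Leaf 6; Node [:: Leaf 6; Leaf 6; Node [:: Leaf 6; Node [:: Leaf 6; Leaf 3; Leaf 6; Leaf 6; Leaf 6]; Leaf 6; Leaf 6; Leaf 6]; Leaf 6; Leaf 6]; Node [:: Leaf 6; Leaf 6; Leaf 6; Node [:: Leaf 6; Node [:: Leaf 6; Leaf 3; Leaf 6; Leaf 6; Leaf 6]; Leaf 6; Leaf 6; Leaf 6]; Leaf 6]; Leaf 6; Leaf 6]; Node [:: Node [:: Leaf 6; Leaf 6; Node [:: Leaf 6; Node [:: Leaf 6; Leaf 3; Leaf 6; Leaf 6; Leaf 6]; Leaf 6; Leaf 6; Leaf 6]; Leaf 6; Leaf 6]; Node [:: Leaf 6; Node [:: Leaf 6; Leaf 6; Node [:: Leaf 6; Leaf 6; Leaf 4; Leaf 6; Leaf 6]; Leaf 6; Leaf 6]; Leaf 6; Node [:: Node [:: Leaf 6; Leaf 6; Leaf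 4; Leaf 6; Leaf 6]; Leaf 6; Node [:: Leaf 1; Leaf 6; Leaf 6; Leaf 6; Leaf 6]; Leaf 6; Leaf 6]; Leaf 6]; Node [:: Leaf 6; Leaf 6; Node [:: Leaf 6; Node [:: Leaf 6; Leaf 6; Leaf 6; Leaf 2; Leaf 6]; Leaf 6; Node [:: Leaf 6; Leaf 3; Leaf 6; Leaf 6; Leaf 6]; Leaf 6]; Leaf 6; Node [:: Leaf 6; Node [:: Leaf 6; Leaf 3; Leaf 6; Leaf 6; Leaf 6]; Leaf 6; Leaf 6; Leaf 6]]; Node [:: Leaf 6; Leaf 6; Leaf 6; Node [:: Leaf 6; Leaf 6; Node [:: Leaf 6; Leaf 6; Leaf 4; Leaf 6; Leaf 6]; Leaf 6; Leaf 6]; Leaf 6]; Leaf 6]; Node [:: Node [:: Leaf 6; Leaf 6; Leaf 6; Node [:: Leaf 6; Node [:: Leaf 6; Leaf 3; Leaf 6; Leaf 6; Leaf 6]; Leaf 6; Leaf 6; Leaf 6]; Leaf 6]; Node [:: Leaf 6; Leaf 6; Node [:: Leaf 6; Node [:: Leaf 6; Leaf 6; Leaf 6; Leaf 2; Leaf 6]; Leaf 6; Node [:: Leaf 6; Leaf 3; Leaf 6; Leaf 6; Leaf 6]; Leaf 6]; Leaf 6; Node [:: Leaf 6; Node [:: Leaf 6; Leaf 3; Leaf 6; Leaf 6; Leaf 6]; Leaf 6; Leaf 6; Leaf 6]]; Node [:: Leaf 6; Node [:: Leaf 6; Leaf 6; Leaf 6; Node [:: Leaf 6; Leaf 6; Leaf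 6; Leaf 2; Leaf 6]; Leaf 6]; Leaf 6; Node [:: Leaf 6; Node [:: Leaf 6; Leaf 6; Leaf 6; Leaf 2; Leaf 6]; Leaf 6; Node [:: Leaf 6; Leaf 3; Leaf 6; Leaf 6; Leaf 6]; Leaf 6]; Leaf 6]; Node [:: Leaf 6; Leaf 6; Node [:: Leaf 6; Leaf 6; Leaf 6; Node [:: Leaf 6; Leaf 6; Leaf 6; Leaf 2; Leaf 6]; Leaf 6]; Leaf 6; Leaf 6]; Leaf 6]; Node [:: Leaf 6; Node [:: Leaf 6; Leaf 6; Leaf 6; Node [:: Leaf 6; Leaf 6; Node [:: Leaf 6; Leaf 6; Leaf 4; Leaf 6; Leaf 6]; Leaf 6; Leaf 6]; Leaf 6]; Node [:: Leaf 6; Leaf 6; Node [:: Leaf 6; Leaf 6; Leaf 6; Node [:: Leaf 6; Leaf 6; Leaf 6; Leaf 2; Leaf 6]; Leaf 6]; Leaf 6; Leaf 6]; Leaf 6; Leaf 6]; Leaf 6]; Node [:: Leaf 6; Node [:: Leaf 6; Node [:: Leaf 6; Leaf 6; Leaf 6; Node [:: Leaf 6; Node [:: Leaf 6; Leaf 1; Leaf 6; Leaf 6; Leaf 6]; Leaf 6; Leaf 6; Leaf 6]; Leaf 6]; Leaf 6; Leaf 6; Leaf 6]; Node [:: Leaf 6; Node [:: Leaf 6; Leaf 6; Leaf 6; Node [:: Leaf 6; Leaf 6; Node [:: Leaf 6; Leaf 6; Leaf 0; Leaf 6; Leaf 6]; Leaf 6; Leaf 6]; Leaf 6]; Leaf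 6; Leaf 6; Leaf 6]; Leaf 6; Leaf 6]]; Node [:: Leaf 6; Node [:: Leaf 6; Node [:: Leaf 6; Leaf 6; Node [:: Leaf 6; Node [:: Leaf 6; Leaf 6; Node [:: Leaf 6; Leaf 6; Leaf 0; Leaf 6; Leaf 6]; Leaf 6; Leaf 6]; Leaf 6; Leaf 6; Leaf 6]; Node [:: Leaf 6; Node [:: Leaf 6; Leaf 6; Leaf 6; Node [:: Leaf 6; Leaf 6; Leaf 6; Leaf 1; Leaf 6]; Leaf 6]; Leaf 6; Leaf 6; Leaf 6]; Leaf 6]; Leaf 6; Leaf 6; Leaf 6]; Node [:: Leaf 6; Node [:: Leaf 6; Node [:: Leaf 6; Leaf 6; Node [:: Leaf 6; Node [:: Leaf 6; Leaf 0; Leaf 6; Leaf 6; Leaf 6]; Leaf 6; Leaf 6; Leaf 6]; Leaf 6; Leaf 6]; Leaf 6; Node [:: Leaf 6; Leaf 6; Node [:: Leaf 6; Leaf 6; Leaf 6; Node [:: Leaf 6; Leaf 6; Leaf 6; Leaf 0; Leaf 6]; Leaf 6]; Leaf 6; Leaf 6]; Leaf 6]; Leaf 6; Leaf 6; Leaf 6]; Node [:: Leaf 6; Node [:: Leaf 6; Node [:: Leaf 6; Leaf 6; Leaf 6; Node [:: Leaf 6; Node [:: Leaf 6; Leaf 1; Leaf 6; Leaf 6; Leaf 6]; Leaf 6; Leaf 6; Leaf 6]; Leaf 6]; Node [:: Leaf 6; Leaf 6; Leaf 6; Node [:: Leaf 6; Leaf 6; Node [:: Leaf 6; Leaf 6;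 Leaf 0; Leaf 6; Leaf 6]; Leaf 6; Leaf 6]; Leaf 6]; Leaf 6; Leaf 6]; Leaf 6; Leaf 6; Leaf 6]; Leaf 6]]; Node [:: Node [:: Leaf 6; Node [:: Leaf 6; Leaf 6; Node [:: Leaf 6; Node [:: Leaf 6; Leaf 6; Leaf 6; Node [:: Leaf 6; Leaf 6; Leaf 6; Node [:: Leaf 6; Leaf 6; Leaf 6; Leaf 0; Leaf 6]; Leaf 6]; Leaf 6]; Leaf 6; Node [:: Leaf 6; Leaf 6; Leaf 6; Node [:: Leaf 6; Node [:: Leaf 6; Leaf 0; Leaf 6; Leaf 6; Leaf 6]; Leaf 6; Leaf 6; Leaf 6]; Leaf 6]; Leaf 6]; Leaf 6; Leaf 6]; Leaf 6; Node [:: Leaf 6; Leaf 6; Node [:: Leaf 6; Node [:: Leaf 6; Node [:: Leaf 6; Leaf 6; Leaf 6; Node [:: Leaf 6; Leaf 6; Leaf 6; Leaf 0; Leaf 6]; Leaf 6]; Leaf 6; Leaf 6; Leaf 6]; Leaf 6; Node [:: Leaf 6; Node [:: Leaf 6; Node [:: Leaf 6; Leaf 0; Leaf 6; Leaf 6; Leaf 6]; Leaf 6; Leaf 6; Leaf 6]; Leaf 6; Leaf 6; Leaf 6]; Leaf 6]; Leaf 6; Leaf 6]; Leaf 6]; Node [:: Node [:: Leaf 6; Node [:: Leaf 6; Leaf 6; Node [:: Leaf 6; Leaf 6; Leaf 6; Node [:: Leaf 6; Leaf 6; Leaf 6; Node [:: Leaf 6; Leaf 6; Leaf 6; Leaf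 0; Leaf 6]; Leaf 6]; Leaf 6]; Leaf 6; Leaf 6]; Leaf 6; Node [:: Leaf 6; Leaf 6; Node [:: Leaf 6; Leaf 6; Leaf 6; Node [:: Leaf 6; Node [:: Leaf 6; Leaf 0; Leaf 6; Leaf 6; Leaf 6]; Leaf 6; Leaf 6; Leaf 6]; Leaf 6]; Leaf 6; Leaf 6]; Leaf 6]; Node [:: Leaf 6; Node [:: Leaf 6; Node [:: Leaf 6; Node [:: Leaf 6; Leaf 6; Leaf 6; Node [:: Leaf 6; Leaf 6; Leaf 6; Leaf 4; Leaf 6]; Leaf 6]; Node [:: Leaf 6; Leaf 6; Node [:: Leaf 6; Leaf 6; Leaf 6; Leaf 6; Leaf 0]; Leaf 6; Node [:: Leaf 6; Leaf 6; Leaf 5; Leaf 6; Leaf 6]]; Node [:: Leaf 6; Leaf 6; Leaf 6; Node [:: Leaf 6; Leaf 6; Leaf 6; Leaf 4; Leaf 6]; Leaf 6]; Leaf 6]; Leaf 6; Node [:: Leaf 6; Leaf 6; Node [:: Leaf 6; Leaf 6; Node [:: Leaf 6; Leaf 6; Leaf 5; Leaf 6; Leaf 6]; Leaf 6; Leaf 6]; Node [:: Leaf 6; Node [:: Leaf 6; Leaf 6; Leaf 6; Leaf 4; Leaf 6]; Leaf 6; Node [:: Leaf 6; Leaf 4; Leaf 6; Leaf 6; Leaf 6]; Leaf 6]; Node [:: Leaf 6; Leaf 6; Node [:: Leaf 6; Leaf 6; Leaf 5; Leaf 6; Leaf 6]; Leaf 6; Leaf 6]]; Leaf 6]; Leaf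 6; Node [:: Leaf 6; Node [:: Leaf 6; Leaf 6; Node [:: Leaf 6; Leaf 6; Node [:: Leaf 6; Leaf 6; Leaf 5; Leaf 6; Leaf 6]; Leaf 6; Leaf 6]; Node [:: Leaf 6; Node [:: Leaf 6; Leaf 6; Leaf 6; Leaf 4; Leaf 6]; Leaf 6; Node [:: Leaf 6; Leaf 4; Leaf 6; Leaf 6; Leaf 6]; Leaf 6]; Node [:: Leaf 6; Leaf 6; Node [:: Leaf 6; Leaf 6; Leaf 5; Leaf 6; Leaf 6]; Leaf 6; Leaf 6]]; Leaf 6; Node [:: Leaf 6; Node [:: Leaf 6; Node [:: Leaf 6; Leaf 4; Leaf 6; Leaf 6; Leaf 6]; Leaf 6; Leaf 6; Leaf 6]; Node [:: Node [:: Leaf 6; Leaf 6; Leaf 5; Leaf 6; Leaf 6]; Leaf 6; Node [:: Leaf 0; Leaf 6; Leaf 6; Leaf 6; Leaf 6]; Leaf 6; Leaf 6]; Node [:: Leaf 6; Node [:: Leaf 6; Leaf 4; Leaf 6; Leaf 6; Leaf 6]; Leaf 6; Leaf 6; Leaf 6]; Leaf 6]; Leaf 6]; Leaf 6]; Node [:: Leaf 6; Node [:: Node [:: Leaf 6; Node [:: Leaf 6; Leaf 6; Leaf 6; Node [:: Leaf 6; Leaf 6; Leaf 6; Leaf 5; Leaf 6]; Leaf 6]; Leaf 6; Leaf 6; Leaf 6]; Leaf 6; Node [:: Leaf 6; Node [:: Leaf 6; Node [:: Leaf 6; Leaf 6; Leaf 6; Leaf 5; Leaf 6]; Leaf 6;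 Node [:: Leaf 6; Leaf 5; Leaf 6; Leaf 6; Leaf 6]; Leaf 6]; Leaf 6; Node [:: Leaf 6; Node [:: Leaf 6; Leaf 6; Leaf 6; Leaf 5; Leaf 6]; Leaf 6; Node [:: Leaf 6; Leaf 5; Leaf 6; Leaf 6; Leaf 6]; Leaf 6]; Leaf 6]; Leaf 6; Node [:: Leaf 6; Leaf 6; Leaf 6; Node [:: Leaf 6; Node [:: Leaf 6; Leaf 5; Leaf 6; Leaf 6; Leaf 6]; Leaf 6; Leaf 6; Leaf 6]; Leaf 6]]; Leaf 6; Node [:: Node [:: Leaf 6; Leaf 6; Leaf 6; Node [:: Leaf 6; Leaf 6; Leaf 6; Node [:: Leaf 6; Leaf 6; Leaf 6; Leaf 5; Leaf 6]; Leaf 6]; Leaf 6]; Leaf 6; Node [:: Leaf 6; Node [:: Leaf 6; Node [:: Leaf 6; Leaf 6; Leaf 6; Leaf 5; Leaf 6]; Leaf 6; Node [:: Leaf 6; Leaf 5; Leaf 6; Leaf 6; Leaf 6]; Leaf 6]; Leaf 6; Node [:: Leaf 6; Node [:: Leaf 6; Leaf 6; Leaf 6; Leaf 5; Leaf 6]; Leaf 6; Node [:: Leaf 6; Leaf 5; Leaf 6; Leaf 6; Leaf 6]; Leaf 6]; Leaf 6]; Leaf 6; Node [:: Leaf 6; Node [:: Leaf 6; Node [:: Leaf 6; Leaf 5; Leaf 6; Leaf 6; Leaf 6]; Leaf 6; Leaf 6; Leaf 6]; Leaf 6; Leaf 6; Leaf 6]]; Leaf 6]; Node [:: Leaf 6;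 Node [:: Leaf 6; Node [:: Node [:: Leaf 6; Leaf 6; Node [:: Leaf 6; Leaf 6; Leaf 5; Leaf 6; Leaf 6]; Leaf 6; Leaf 6]; Node [:: Leaf 6; Node [:: Leaf 6; Leaf 6; Leaf 6; Leaf 4; Leaf 6]; Leaf 6; Node [:: Leaf 6; Leaf 4; Leaf 6; Leaf 6; Leaf 6]; Leaf 6]; Node [:: Leaf 6; Leaf 6; Node [:: Leaf 6; Leaf 6; Leaf 5; Leaf 6; Leaf 6]; Leaf 6; Leaf 6]; Leaf 6; Leaf 6]; Leaf 6; Node [:: Leaf 6; Node [:: Leaf 6; Node [:: Leaf 6; Leaf 4; Leaf 6; Leaf 6; Leaf 6]; Leaf 6; Leaf 6; Leaf 6]; Node [:: Node [:: Leaf 6; Leaf 6; Leaf 5; Leaf 6; Leaf 6]; Leaf 6; Node [:: Leaf 0; Leaf 6; Leaf 6; Leaf 6; Leaf 6]; Leaf 6; Leaf 6]; Node [:: Leaf 6; Node [:: Leaf 6; Leaf 4; Leaf 6; Leaf 6; Leaf 6]; Leaf 6; Leaf 6; Leaf 6]; Leaf 6]; Leaf 6]; Leaf 6; Node [:: Leaf 6; Node [:: Leaf 6; Node [:: Leaf 6; Leaf 6; Leaf 6; Node [:: Leaf 6; Leaf 6; Leaf 6; Leaf 4; Leaf 6]; Leaf 6]; Node [:: Leaf 6; Leaf 6; Node [:: Leaf 6; Leaf 6; Leaf 6; Leaf 6; Leaf 0]; Leaf 6; Node [:: Leaf 6; Leaf 6; Leaf 5; Leaf 6; Leaf 6]];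 Node [:: Leaf 6; Leaf 6; Leaf 6; Node [:: Leaf 6; Leaf 6; Leaf 6; Leaf 4; Leaf 6]; Leaf 6]; Leaf 6]; Leaf 6; Node [:: Node [:: Leaf 6; Leaf 6; Node [:: Leaf 6; Leaf 6; Leaf 5; Leaf 6; Leaf 6]; Leaf 6; Leaf 6]; Node [:: Leaf 6; Node [:: Leaf 6; Leaf 6; Leaf 6; Leaf 4; Leaf 6]; Leaf 6; Node [:: Leaf 6; Leaf 4; Leaf 6; Leaf 6; Leaf 6]; Leaf 6]; Node [:: Leaf 6; Leaf 6; Node [:: Leaf 6; Leaf 6; Leaf 5; Leaf 6; Leaf 6]; Leaf 6; Leaf 6]; Leaf 6; Leaf 6]; Leaf 6]; Leaf 6]; Node [:: Leaf 6; Node [:: Leaf 6; Leaf 6; Node [:: Leaf 6; Node [:: Leaf 6; Node [:: Leaf 6; Leaf 0; Leaf 6; Leaf 6; Leaf 6]; Leaf 6; Leaf 6; Leaf 6]; Leaf 6; Leaf 6; Leaf 6]; Leaf 6; Leaf 6]; Leaf 6; Node [:: Leaf 6; Leaf 6; Node [:: Leaf 6; Node [:: Leaf 6; Leaf 6; Leaf 6; Node [:: Leaf 6; Leaf 6; Leaf 6; Leaf 0; Leaf 6]; Leaf 6]; Leaf 6; Leaf 6; Leaf 6]; Leaf 6; Leaf 6]; Leaf 6]]; Node [:: Leaf 6; Node [:: Node [:: Leaf 6; Node [:: Leaf 6; Node [:: Leaf 6; Leaf 6; Leaf 6; Node [:: Leaf 6; Leaf 6; Leaf 6; Leaf 5;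 Leaf 6]; Leaf 6]; Leaf 6; Leaf 6; Leaf 6]; Leaf 6; Node [:: Leaf 6; Leaf 6; Leaf 6; Node [:: Leaf 6; Leaf 6; Leaf 6; Node [:: Leaf 6; Leaf 6; Leaf 6; Leaf 5; Leaf 6]; Leaf 6]; Leaf 6]; Leaf 6]; Leaf 6; Node [:: Leaf 6; Node [:: Leaf 6; Node [:: Leaf 6; Node [:: Leaf 6; Leaf 6; Leaf 6; Leaf 5; Leaf 6]; Leaf 6; Node [:: Leaf 6; Leaf 5; Leaf 6; Leaf 6; Leaf 6]; Leaf 6]; Leaf 6; Node [:: Leaf 6; Node [:: Leaf 6; Leaf 6; Leaf 6; Leaf 5; Leaf 6]; Leaf 6; Node [:: Leaf 6; Leaf 5; Leaf 6; Leaf 6; Leaf 6]; Leaf 6]; Leaf 6]; Leaf 6; Node [:: Leaf 6; Node [:: Leaf 6; Node [:: Leaf 6; Leaf 6; Leaf 6; Leaf 5; Leaf 6]; Leaf 6; Node [:: Leaf 6; Leaf 5; Leaf 6; Leaf 6; Leaf 6]; Leaf 6]; Leaf 6; Node [:: Leaf 6; Node [:: Leaf 6; Leaf 6; Leaf 6; Leaf 5; Leaf 6]; Leaf 6; Node [:: Leaf 6; Leaf 5; Leaf 6; Leaf 6; Leaf 6]; Leaf 6]; Leaf 6]; Leaf 6]; Leaf 6; Node [:: Leaf 6; Node [:: Leaf 6; Leaf 6; Leaf 6; Node [:: Leaf 6; Node [:: Leaf 6; Leaf 5; Leaf 6; Leaf 6; Leaf 6]; Leaf 6; Leaf 6; Leaf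 6]; Leaf 6]; Leaf 6; Node [:: Leaf 6; Node [:: Leaf 6; Node [:: Leaf 6; Leaf 5; Leaf 6; Leaf 6; Leaf 6]; Leaf 6; Leaf 6; Leaf 6]; Leaf 6; Leaf 6; Leaf 6]; Leaf 6]]; Leaf 6; Node [:: Node [:: Leaf 6; Node [:: Leaf 6; Node [:: Leaf 6; Node [:: Leaf 6; Leaf 5; Leaf 6; Leaf 6; Leaf 6]; Leaf 6; Leaf 6; Leaf 6]; Leaf 6; Leaf 6; Leaf 6]; Leaf 6; Node [:: Leaf 6; Leaf 6; Leaf 6; Node [:: Leaf 6; Node [:: Leaf 6; Leaf 5; Leaf 6; Leaf 6; Leaf 6]; Leaf 6; Leaf 6; Leaf 6]; Leaf 6]; Leaf 6]; Leaf 6; Node [:: Leaf 6; Node [:: Leaf 6; Node [:: Leaf 6; Node [:: Leaf 6; Leaf 6; Leaf 6; Leaf 5; Leaf 6]; Leaf 6; Node [:: Leaf 6; Leaf 5; Leaf 6; Leaf 6; Leaf 6]; Leaf 6]; Leaf 6; Node [:: Leaf 6; Node [:: Leaf 6; Leaf 6; Leaf 6; Leaf 5; Leaf 6]; Leaf 6; Node [:: Leaf 6; Leaf 5; Leaf 6; Leaf 6; Leaf 6]; Leaf 6]; Leaf 6]; Leaf 6; Node [:: Leaf 6; Node [:: Leaf 6; Node [:: Leaf 6; Leaf 6; Leaf 6; Leaf 5; Leaf 6]; Leaf 6; Node [:: Leaf 6; Leaf 5; Leaf 6; Leaf 6; Leaf 6]; Leaf 6]; Leaf 6; Node [:: Leaf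 6; Node [:: Leaf 6; Leaf 6; Leaf 6; Leaf 5; Leaf 6]; Leaf 6; Node [:: Leaf 6; Leaf 5; Leaf 6; Leaf 6; Leaf 6]; Leaf 6]; Leaf 6]; Leaf 6]; Leaf 6; Node [:: Leaf 6; Node [:: Leaf 6; Leaf 6; Leaf 6; Node [:: Leaf 6; Leaf 6; Leaf 6; Node [:: Leaf 6; Leaf 6; Leaf 6; Leaf 5; Leaf 6]; Leaf 6]; Leaf 6]; Leaf 6; Node [:: Leaf 6; Node [:: Leaf 6; Leaf 6; Leaf 6; Node [:: Leaf 6; Leaf 6; Leaf 6; Leaf 5; Leaf 6]; Leaf 6]; Leaf 6; Leaf 6; Leaf 6]; Leaf 6]]; Leaf 6]; Node [:: Node [:: Leaf 6; Node [:: Leaf 6; Leaf 6; Node [:: Leaf 6; Node [:: Leaf 6; Leaf 6; Leaf 6; Node [:: Leaf 6; Leaf 6; Leaf 6; Leaf 0; Leaf 6]; Leaf 6]; Leaf 6; Leaf 6; Leaf 6]; Leaf 6; Leaf 6]; Leaf 6; Node [:: Leaf 6; Leaf 6; Node [:: Leaf 6; Node [:: Leaf 6; Node [:: Leaf 6; Leaf 0; Leaf 6; Leaf 6; Leaf 6]; Leaf 6; Leaf 6; Leaf 6]; Leaf 6; Leaf 6; Leaf 6]; Leaf 6; Leaf 6]; Leaf 6]; Node [:: Leaf 6; Node [:: Leaf 6; Node [:: Node [:: Leaf 6; Leaf 6; Node [:: Leaf 6; Leaf 6; Leaf 5; Leaf 6; Leaf 6]; Leaf 6; Leaf 6]; Node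 [:: Leaf 6; Node [:: Leaf 6; Leaf 6; Leaf 6; Leaf 4; Leaf 6]; Leaf 6; Node [:: Leaf 6; Leaf 4; Leaf 6; Leaf 6; Leaf 6]; Leaf 6]; Node [:: Leaf 6; Leaf 6; Node [:: Leaf 6; Leaf 6; Leaf 5; Leaf 6; Leaf 6]; Leaf 6; Leaf 6]; Leaf 6; Leaf 6]; Leaf 6; Node [:: Leaf 6; Node [:: Leaf 6; Leaf 6; Leaf 6; Node [:: Leaf 6; Leaf 6; Leaf 6; Leaf 4; Leaf 6]; Leaf 6]; Node [:: Leaf 6; Leaf 6; Node [:: Leaf 6; Leaf 6; Leaf 6; Leaf 6; Leaf 0]; Leaf 6; Node [:: Leaf 6; Leaf 6; Leaf 5; Leaf 6; Leaf 6]]; Node [:: Leaf 6; Leaf 6; Leaf 6; Node [:: Leaf 6; Leaf 6; Leaf 6; Leaf 4; Leaf 6]; Leaf 6]; Leaf 6]; Leaf 6]; Leaf 6; Node [:: Leaf 6; Node [:: Leaf 6; Node [:: Leaf 6; Node [:: Leaf 6; Leaf 4; Leaf 6; Leaf 6; Leaf 6]; Leaf 6; Leaf 6; Leaf 6]; Node [:: Node [:: Leaf 6; Leaf 6; Leaf 5; Leaf 6; Leaf 6]; Leaf 6; Node [:: Leaf 0; Leaf 6; Leaf 6; Leaf 6; Leaf 6]; Leaf 6; Leaf 6]; Node [:: Leaf 6; Node [:: Leaf 6; Leaf 4; Leaf 6; Leaf 6; Leaf 6]; Leaf 6; Leaf 6; Leaf 6]; Leaf 6]; Leaf 6; Node [::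 Node [:: Leaf 6; Leaf 6; Node [:: Leaf 6; Leaf 6; Leaf 5; Leaf 6; Leaf 6]; Leaf 6; Leaf 6]; Node [:: Leaf 6; Node [:: Leaf 6; Leaf 6; Leaf 6; Leaf 4; Leaf 6]; Leaf 6; Node [:: Leaf 6; Leaf 4; Leaf 6; Leaf 6; Leaf 6]; Leaf 6]; Node [:: Leaf 6; Leaf 6; Node [:: Leaf 6; Leaf 6; Leaf 5; Leaf 6; Leaf 6]; Leaf 6; Leaf 6]; Leaf 6; Leaf 6]; Leaf 6]; Leaf 6]; Node [:: Leaf 6; Node [:: Node [:: Leaf 6; Node [:: Leaf 6; Node [:: Leaf 6; Leaf 5; Leaf 6; Leaf 6; Leaf 6]; Leaf 6; Leaf 6; Leaf 6]; Leaf 6; Leaf 6; Leaf 6]; Leaf 6; Node [:: Leaf 6; Node [:: Leaf 6; Node [:: Leaf 6; Leaf 6; Leaf 6; Leaf 5; Leaf 6]; Leaf 6; Node [:: Leaf 6; Leaf 5; Leaf 6; Leaf 6; Leaf 6]; Leaf 6]; Leaf 6; Node [:: Leaf 6; Node [:: Leaf 6; Leaf 6; Leaf 6; Leaf 5; Leaf 6]; Leaf 6; Node [:: Leaf 6; Leaf 5; Leaf 6; Leaf 6; Leaf 6]; Leaf 6]; Leaf 6]; Leaf 6; Node [:: Leaf 6; Leaf 6; Leaf 6; Node [:: Leaf 6; Leaf 6; Leaf 6; Node [:: Leaf 6; Leaf 6; Leaf 6; Leaf 5; Leaf 6]; Leaf 6]; Leaf 6]]; Leaf 6; Node [:: Node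 [:: Leaf 6; Leaf 6; Leaf 6; Node [:: Leaf 6; Node [:: Leaf 6; Leaf 5; Leaf 6; Leaf 6; Leaf 6]; Leaf 6; Leaf 6; Leaf 6]; Leaf 6]; Leaf 6; Node [:: Leaf 6; Node [:: Leaf 6; Node [:: Leaf 6; Leaf 6; Leaf 6; Leaf 5; Leaf 6]; Leaf 6; Node [:: Leaf 6; Leaf 5; Leaf 6; Leaf 6; Leaf 6]; Leaf 6]; Leaf 6; Node [:: Leaf 6; Node [:: Leaf 6; Leaf 6; Leaf 6; Leaf 5; Leaf 6]; Leaf 6; Node [:: Leaf 6; Leaf 5; Leaf 6; Leaf 6; Leaf 6]; Leaf 6]; Leaf 6]; Leaf 6; Node [:: Leaf 6; Node [:: Leaf 6; Leaf 6; Leaf 6; Node [:: Leaf 6; Leaf 6; Leaf 6; Leaf 5; Leaf 6]; Leaf 6]; Leaf 6; Leaf 6; Leaf 6]]; Leaf 6]; Node [:: Leaf 6; Node [:: Leaf 6; Node [:: Leaf 6; Node [:: Leaf 6; Node [:: Leaf 6; Leaf 4; Leaf 6; Leaf 6; Leaf 6]; Leaf 6; Leaf 6; Leaf 6]; Node [:: Node [:: Leaf 6; Leaf 6; Leaf 5; Leaf 6; Leaf 6]; Leaf 6; Node [:: Leaf 0; Leaf 6; Leaf 6; Leaf 6; Leaf 6]; Leaf 6; Leaf 6]; Node [:: Leaf 6; Node [:: Leaf 6; Leaf 4; Leaf 6; Leaf 6; Leaf 6]; Leaf 6; Leaf 6; Leaf 6]; Leaf 6]; Leaf 6; Node [:: Leaf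 6; Leaf 6; Node [:: Leaf 6; Leaf 6; Node [:: Leaf 6; Leaf 6; Leaf 5; Leaf 6; Leaf 6]; Leaf 6; Leaf 6]; Node [:: Leaf 6; Node [:: Leaf 6; Leaf 6; Leaf 6; Leaf 4; Leaf 6]; Leaf 6; Node [:: Leaf 6; Leaf 4; Leaf 6; Leaf 6; Leaf 6]; Leaf 6]; Node [:: Leaf 6; Leaf 6; Node [:: Leaf 6; Leaf 6; Leaf 5; Leaf 6; Leaf 6]; Leaf 6; Leaf 6]]; Leaf 6]; Leaf 6; Node [:: Leaf 6; Node [:: Leaf 6; Leaf 6; Node [:: Leaf 6; Leaf 6; Node [:: Leaf 6; Leaf 6; Leaf 5; Leaf 6; Leaf 6]; Leaf 6; Leaf 6]; Node [:: Leaf 6; Node [:: Leaf 6; Leaf 6; Leaf 6; Leaf 4; Leaf 6]; Leaf 6; Node [:: Leaf 6; Leaf 4; Leaf 6; Leaf 6; Leaf 6]; Leaf 6]; Node [:: Leaf 6; Leaf 6; Node [:: Leaf 6; Leaf 6; Leaf 5; Leaf 6; Leaf 6]; Leaf 6; Leaf 6]]; Leaf 6; Node [:: Leaf 6; Node [:: Leaf 6; Leaf 6; Leaf 6; Node [:: Leaf 6; Leaf 6; Leaf 6; Leaf 4; Leaf 6]; Leaf 6]; Node [:: Leaf 6; Leaf 6; Node [:: Leaf 6; Leaf 6; Leaf 6; Leaf 6; Leaf 0]; Leaf 6; Node [:: Leaf 6; Leaf 6; Leaf 5; Leaf 6; Leaf 6]]; Node [:: Leaf 6; Leaf 6; Leaf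 6; Node [:: Leaf 6; Leaf 6; Leaf 6; Leaf 4; Leaf 6]; Leaf 6]; Leaf 6]; Leaf 6]; Leaf 6]; Node [:: Leaf 6; Node [:: Leaf 6; Leaf 6; Node [:: Leaf 6; Leaf 6; Leaf 6; Node [:: Leaf 6; Node [:: Leaf 6; Leaf 0; Leaf 6; Leaf 6; Leaf 6]; Leaf 6; Leaf 6; Leaf 6]; Leaf 6]; Leaf 6; Leaf 6]; Leaf 6; Node [:: Leaf 6; Leaf 6; Node [:: Leaf 6; Leaf 6; Leaf 6; Node [:: Leaf 6; Leaf 6; Leaf 6; Node [:: Leaf 6; Leaf 6; Leaf 6; Leaf 0; Leaf 6]; Leaf 6]; Leaf 6]; Leaf 6; Leaf 6]; Leaf 6]]; Node [:: Leaf 6; Node [:: Leaf 6; Leaf 6; Node [:: Leaf 6; Node [:: Leaf 6; Node [:: Leaf 6; Node [:: Leaf 6; Leaf 0; Leaf 6; Leaf 6; Leaf 6]; Leaf 6; Leaf 6; Leaf 6]; Leaf 6; Leaf 6; Leaf 6]; Leaf 6; Node [:: Leaf 6; Node [:: Leaf 6; Leaf 6; Leaf 6; Node [:: Leaf 6; Leaf 6; Leaf 6; Leaf 0; Leaf 6]; Leaf 6]; Leaf 6; Leaf 6; Leaf 6]; Leaf 6]; Leaf 6; Leaf 6]; Leaf 6; Node [:: Leaf 6; Leaf 6; Node [:: Leaf 6; Node [:: Leaf 6; Leaf 6; Leaf 6; Node [:: Leaf 6; Node [:: Leaf 6; Leaf 0; Leaf 6; Leaf 6; Leaf 6]; Leaf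 6; Leaf 6; Leaf 6]; Leaf 6]; Leaf 6; Node [:: Leaf 6; Leaf 6; Leaf 6; Node [:: Leaf 6; Leaf 6; Leaf 6; Node [:: Leaf 6; Leaf 6; Leaf 6; Leaf 0; Leaf 6]; Leaf 6]; Leaf 6]; Leaf 6]; Leaf 6; Leaf 6]; Leaf 6]]; Node [:: Node [:: Leaf 6; Node [:: Leaf 6; Node [:: Leaf 6; Node [:: Leaf 6; Leaf 6; Leaf 6; Node [:: Leaf 6; Leaf 6; Leaf 6; Node [:: Leaf 6; Leaf 6; Leaf 6; Leaf 1; Leaf 6]; Leaf 6]; Leaf 6]; Node [:: Leaf 6; Leaf 6; Leaf 6; Node [:: Leaf 6; Leaf 6; Node [:: Leaf 6; Leaf 6; Leaf 0; Leaf 6; Leaf 6]; Leaf 6; Leaf 6]; Leaf 6]; Leaf 6; Leaf 6]; Leaf 6; Leaf 6; Leaf 6]; Node [:: Leaf 6; Node [:: Leaf 6; Node [:: Leaf 6; Leaf 6; Node [:: Leaf 6; Leaf 6; Leaf 6; Node [:: Leaf 6; Leaf 6; Leaf 6; Leaf 0; Leaf 6]; Leaf 6]; Leaf 6; Leaf 6]; Leaf 6; Node [:: Leaf 6; Leaf 6; Node [:: Leaf 6; Node [:: Leaf 6; Leaf 0; Leaf 6; Leaf 6; Leaf 6]; Leaf 6; Leaf 6; Leaf 6]; Leaf 6; Leaf 6]; Leaf 6]; Leaf 6; Leaf 6; Leaf 6]; Node [:: Leaf 6; Node [:: Leaf 6; Leaf 6; Node [:: Leaf 6; Node [:: Leaf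 6; Leaf 6; Node [:: Leaf 6; Leaf 6; Leaf 0; Leaf 6; Leaf 6]; Leaf 6; Leaf 6]; Leaf 6; Leaf 6; Leaf 6]; Node [:: Leaf 6; Node [:: Leaf 6; Node [:: Leaf 6; Leaf 1; Leaf 6; Leaf 6; Leaf 6]; Leaf 6; Leaf 6; Leaf 6]; Leaf 6; Leaf 6; Leaf 6]; Leaf 6]; Leaf 6; Leaf 6; Leaf 6]; Leaf 6]; Node [:: Node [:: Leaf 6; Node [:: Leaf 6; Node [:: Leaf 6; Leaf 6; Leaf 6; Node [:: Leaf 6; Leaf 6; Leaf 6; Node [:: Leaf 6; Leaf 6; Leaf 6; Leaf 1; Leaf 6]; Leaf 6]; Leaf 6]; Leaf 6; Leaf 6; Leaf 6]; Node [:: Leaf 6; Node [:: Leaf 6; Leaf 6; Leaf 6; Node [:: Leaf 6; Leaf 6; Node [:: Leaf 6; Leaf 6; Leaf 0; Leaf 6; Leaf 6]; Leaf 6; Leaf 6]; Leaf 6]; Leaf 6; Leaf 6; Leaf 6]; Leaf 6; Leaf 6]; Node [:: Node [:: Leaf 6; Node [:: Leaf 6; Leaf 6; Node [:: Leaf 6; Leaf 6; Leaf 6; Node [:: Leaf 6; Leaf 6; Leaf 6; Leaf 3; Leaf 6]; Leaf 6]; Leaf 6; Leaf 6]; Node [:: Leaf 6; Leaf 6; Leaf 6; Node [:: Leaf 6; Leaf 6; Leaf 6; Node [:: Leaf 6; Leaf 6; Leaf 6; Leaf 3; Leaf 6]; Leaf 6]; Leaf 6]; Leaf 6; Leaf 6];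 Node [:: Node [:: Leaf 6; Leaf 6; Node [:: Leaf 6; Leaf 6; Leaf 6; Node [:: Leaf 6; Leaf 6; Leaf 6; Leaf 3; Leaf 6]; Leaf 6]; Leaf 6; Leaf 6]; Node [:: Leaf 6; Node [:: Leaf 6; Leaf 6; Node [:: Leaf 6; Leaf 6; Leaf 4; Leaf 6; Leaf 6]; Leaf 6; Leaf 6]; Leaf 6; Node [:: Leaf 6; Leaf 6; Node [:: Leaf 6; Leaf 6; Leaf 6; Leaf 6; Leaf 1]; Leaf 6; Node [:: Leaf 6; Leaf 6; Leaf 4; Leaf 6; Leaf 6]]; Leaf 6]; Node [:: Leaf 6; Leaf 6; Node [:: Leaf 6; Node [:: Leaf 6; Leaf 6; Leaf 6; Leaf 3; Leaf 6]; Leaf 6; Node [:: Leaf 6; Leaf 2; Leaf 6; Leaf 6; Leaf 6]; Leaf 6]; Leaf 6; Node [:: Leaf 6; Leaf 6; Leaf 6; Node [:: Leaf 6; Leaf 6; Leaf 6; Leaf 3; Leaf 6]; Leaf 6]]; Node [:: Leaf 6; Leaf 6; Leaf 6; Node [:: Leaf 6; Leaf 6; Node [:: Leaf 6; Leaf 6; Leaf 4; Leaf 6; Leaf 6]; Leaf 6; Leaf 6]; Leaf 6]; Leaf 6]; Node [:: Node [:: Leaf 6; Leaf 6; Leaf 6; Node [:: Leaf 6; Leaf 6; Leaf 6; Node [:: Leaf 6; Leaf 6; Leaf 6; Leaf 3; Leaf 6]; Leaf 6]; Leaf 6]; Node [:: Leaf 6; Leaf 6; Node [:: Leaf 6; Node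 [:: Leaf 6; Leaf 6; Leaf 6; Leaf 3; Leaf 6]; Leaf 6; Node [:: Leaf 6; Leaf 2; Leaf 6; Leaf 6; Leaf 6]; Leaf 6]; Leaf 6; Node [:: Leaf 6; Leaf 6; Leaf 6; Node [:: Leaf 6; Leaf 6; Leaf 6; Leaf 3; Leaf 6]; Leaf 6]]; Node [:: Leaf 6; Node [:: Leaf 6; Node [:: Leaf 6; Leaf 2; Leaf 6; Leaf 6; Leaf 6]; Leaf 6; Leaf 6; Leaf 6]; Leaf 6; Node [:: Leaf 6; Node [:: Leaf 6; Leaf 6; Leaf 6; Leaf 3; Leaf 6]; Leaf 6; Node [:: Leaf 6; Leaf 2; Leaf 6; Leaf 6; Leaf 6]; Leaf 6]; Leaf 6]; Node [:: Leaf 6; Leaf 6; Node [:: Leaf 6; Node [:: Leaf 6; Leaf 2; Leaf 6; Leaf 6; Leaf 6]; Leaf 6; Leaf 6; Leaf 6]; Leaf 6; Leaf 6]; Leaf 6]; Node [:: Leaf 6; Node [:: Leaf 6; Leaf 6; Leaf 6; Node [:: Leaf 6; Leaf 6; Node [:: Leaf 6; Leaf 6; Leaf 4; Leaf 6; Leaf 6]; Leaf 6; Leaf 6]; Leaf 6]; Node [:: Leaf 6; Leaf 6; Node [:: Leaf 6; Node [:: Leaf 6; Leaf 2; Leaf 6; Leaf 6; Leaf 6]; Leaf 6; Leaf 6; Leaf 6]; Leaf 6; Leaf 6]; Leaf 6; Leaf 6]; Leaf 6]; Node [:: Node [:: Leaf 6; Node [:: Leaf 6; Node [:: Leaf 6;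 Leaf 6; Node [:: Leaf 6; Leaf 6; Leaf 5; Leaf 6; Leaf 6]; Leaf 6; Leaf 6]; Leaf 6; Leaf 6; Leaf 6]; Leaf 6; Node [:: Leaf 6; Leaf 6; Leaf 6; Node [:: Leaf 6; Leaf 6; Node [:: Leaf 6; Leaf 6; Leaf 5; Leaf 6; Leaf 6]; Leaf 6; Leaf 6]; Leaf 6]; Leaf 6]; Node [:: Leaf 6; Node [:: Leaf 6; Node [:: Leaf 6; Node [:: Leaf 6; Leaf 6; Leaf 6; Leaf 4; Leaf 6]; Leaf 6; Node [:: Leaf 6; Leaf 4; Leaf 6; Leaf 6; Leaf 6]; Leaf 6]; Leaf 6; Node [:: Leaf 6; Leaf 6; Leaf 6; Node [:: Leaf 6; Leaf 6; Leaf 6; Leaf 4; Leaf 6]; Leaf 6]; Leaf 6]; Leaf 6; Node [:: Leaf 6; Node [:: Leaf 6; Node [:: Leaf 6; Leaf 4; Leaf 6; Leaf 6; Leaf 6]; Leaf 6; Leaf 6; Leaf 6]; Leaf 6; Node [:: Leaf 6; Node [:: Leaf 6; Leaf 6; Leaf 6; Leaf 4; Leaf 6]; Leaf 6; Node [:: Leaf 6; Leaf 4; Leaf 6; Leaf 6; Leaf 6]; Leaf 6]; Leaf 6]; Leaf 6]; Node [:: Leaf 6; Node [:: Leaf 6; Node [:: Leaf 6; Leaf 6; Node [:: Leaf 6; Leaf 6; Leaf 5; Leaf 6; Leaf 6]; Leaf 6; Leaf 6]; Leaf 6; Node [:: Leaf 6; Leaf 6; Node [:: Leaf 6; Leaf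 6; Leaf 6; Leaf 6; Leaf 0]; Leaf 6; Node [:: Leaf 6; Leaf 6; Leaf 5; Leaf 6; Leaf 6]]; Leaf 6]; Leaf 6; Node [:: Leaf 6; Node [:: Node [:: Leaf 6; Leaf 6; Leaf 5; Leaf 6; Leaf 6]; Leaf 6; Node [:: Leaf 0; Leaf 6; Leaf 6; Leaf 6; Leaf 6]; Leaf 6; Leaf 6]; Leaf 6; Node [:: Leaf 6; Leaf 6; Node [:: Leaf 6; Leaf 6; Leaf 5; Leaf 6; Leaf 6]; Leaf 6; Leaf 6]; Leaf 6]; Leaf 6]; Node [:: Leaf 6; Node [:: Leaf 6; Leaf 6; Leaf 6; Node [:: Leaf 6; Leaf 6; Leaf 6; Node [:: Leaf 6; Leaf 6; Leaf 6; Leaf 4; Leaf 6]; Leaf 6]; Leaf 6]; Leaf 6; Node [:: Leaf 6; Node [:: Leaf 6; Node [:: Leaf 6; Leaf 4; Leaf 6; Leaf 6; Leaf 6]; Leaf 6; Leaf 6; Leaf 6]; Leaf 6; Leaf 6; Leaf 6]; Leaf 6]; Leaf 6]; Node [:: Node [:: Leaf 6; Leaf 6; Node [:: Leaf 6; Node [:: Leaf 6; Node [:: Leaf 6; Leaf 3; Leaf 6; Leaf 6; Leaf 6]; Leaf 6; Leaf 6; Leaf 6]; Leaf 6; Leaf 6; Leaf 6]; Node [:: Leaf 6; Leaf 6; Node [:: Leaf 6; Node [:: Leaf 6; Leaf 3; Leaf 6; Leaf 6; Leaf 6]; Leaf 6; Leaf 6; Leaf 6]; Leaf 6; Leaf 6];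 Leaf 6]; Node [:: Leaf 6; Node [:: Leaf 6; Node [:: Leaf 6; Leaf 6; Node [:: Leaf 6; Leaf 6; Leaf 4; Leaf 6; Leaf 6]; Leaf 6; Leaf 6]; Leaf 6; Leaf 6; Leaf 6]; Node [:: Node [:: Leaf 6; Node [:: Leaf 6; Leaf 3; Leaf 6; Leaf 6; Leaf 6]; Leaf 6; Leaf 6; Leaf 6]; Leaf 6; Node [:: Leaf 6; Node [:: Leaf 6; Leaf 6; Leaf 6; Leaf 2; Leaf 6]; Leaf 6; Node [:: Leaf 6; Leaf 3; Leaf 6; Leaf 6; Leaf 6]; Leaf 6]; Leaf 6; Leaf 6]; Node [:: Leaf 6; Node [:: Node [:: Leaf 6; Leaf 6; Leaf 4; Leaf 6; Leaf 6]; Leaf 6; Node [:: Leaf 1; Leaf 6; Leaf 6; Leaf 6; Leaf 6]; Leaf 6; Leaf 6]; Leaf 6; Node [:: Leaf 6; Leaf 6; Node [:: Leaf 6; Leaf 6; Leaf 4; Leaf 6; Leaf 6]; Leaf 6; Leaf 6]; Leaf 6]; Node [:: Leaf 6; Leaf 6; Node [:: Leaf 6; Node [:: Leaf 6; Leaf 3; Leaf 6; Leaf 6; Leaf 6]; Leaf 6; Leaf 6; Leaf 6]; Leaf 6; Leaf 6]]; Node [:: Leaf 6; Node [:: Leaf 6; Leaf 6; Node [:: Leaf 6; Leaf 6; Leaf 6; Node [:: Leaf 6; Leaf 6; Leaf 6; Leaf 2; Leaf 6]; Leaf 6]; Leaf 6; Leaf 6]; Node [:: Leaf 6; Node [:: Leaf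 6; Node [:: Leaf 6; Leaf 6; Leaf 6; Leaf 2; Leaf 6]; Leaf 6; Node [:: Leaf 6; Leaf 3; Leaf 6; Leaf 6; Leaf 6]; Leaf 6]; Leaf 6; Node [:: Leaf 6; Leaf 6; Leaf 6; Node [:: Leaf 6; Leaf 6; Leaf 6; Leaf 2; Leaf 6]; Leaf 6]; Leaf 6]; Node [:: Node [:: Leaf 6; Node [:: Leaf 6; Leaf 3; Leaf 6; Leaf 6; Leaf 6]; Leaf 6; Leaf 6; Leaf 6]; Leaf 6; Node [:: Leaf 6; Node [:: Leaf 6; Leaf 6; Leaf 6; Leaf 2; Leaf 6]; Leaf 6; Node [:: Leaf 6; Leaf 3; Leaf 6; Leaf 6; Leaf 6]; Leaf 6]; Leaf 6; Leaf 6]; Node [:: Leaf 6; Node [:: Leaf 6; Node [:: Leaf 6; Leaf 3; Leaf 6; Leaf 6; Leaf 6]; Leaf 6; Leaf 6; Leaf 6]; Leaf 6; Leaf 6; Leaf 6]]; Node [:: Leaf 6; Leaf 6; Node [:: Leaf 6; Leaf 6; Node [:: Leaf 6; Leaf 6; Leaf 6; Node [:: Leaf 6; Leaf 6; Leaf 6; Leaf 2; Leaf 6]; Leaf 6]; Leaf 6; Leaf 6]; Node [:: Leaf 6; Node [:: Leaf 6; Leaf 6; Node [:: Leaf 6; Leaf 6; Leaf 4; Leaf 6; Leaf 6]; Leaf 6; Leaf 6]; Leaf 6; Leaf 6; Leaf 6]; Leaf 6]; Leaf 6]; Node [:: Leaf 6; Node [:: Leaf 6; Leaf 6; Leaf 6;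 Node [:: Leaf 6; Node [:: Leaf 6; Node [:: Leaf 6; Leaf 1; Leaf 6; Leaf 6; Leaf 6]; Leaf 6; Leaf 6; Leaf 6]; Leaf 6; Leaf 6; Leaf 6]; Leaf 6]; Node [:: Leaf 6; Leaf 6; Leaf 6; Node [:: Leaf 6; Node [:: Leaf 6; Leaf 6; Node [:: Leaf 6; Leaf 6; Leaf 0; Leaf 6; Leaf 6]; Leaf 6; Leaf 6]; Leaf 6; Leaf 6; Leaf 6]; Leaf 6]; Leaf 6; Leaf 6]]; Node [:: Node [:: Leaf 6; Node [:: Leaf 6; Node [:: Leaf 6; Leaf 6; Node [:: Leaf 6; Leaf 6; Leaf 6; Node [:: Leaf 6; Leaf 6; Leaf 6; Leaf 0; Leaf 6]; Leaf 6]; Leaf 6; Leaf 6]; Leaf 6; Leaf 6; Leaf 6]; Leaf 6; Node [:: Leaf 6; Node [:: Leaf 6; Leaf 6; Node [:: Leaf 6; Node [:: Leaf 6; Leaf 0; Leaf 6; Leaf 6; Leaf 6]; Leaf 6; Leaf 6; Leaf 6]; Leaf 6; Leaf 6]; Leaf 6; Leaf 6; Leaf 6]; Leaf 6]; Node [:: Leaf 6; Node [:: Node [:: Leaf 6; Node [:: Leaf 6; Leaf 6; Node [:: Leaf 6; Leaf 6; Leaf 5; Leaf 6; Leaf 6]; Leaf 6; Leaf 6]; Leaf 6; Leaf 6; Leaf 6]; Node [:: Leaf 6; Node [:: Leaf 6; Node [:: Leaf 6; Leaf 6; Leaf 6; Leaf 4; Leaf 6]; Leaf 6; Node [:: Leaf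 6; Leaf 4; Leaf 6; Leaf 6; Leaf 6]; Leaf 6]; Leaf 6; Node [:: Leaf 6; Leaf 6; Leaf 6; Node [:: Leaf 6; Leaf 6; Leaf 6; Leaf 4; Leaf 6]; Leaf 6]; Leaf 6]; Node [:: Leaf 6; Node [:: Leaf 6; Leaf 6; Node [:: Leaf 6; Leaf 6; Leaf 5; Leaf 6; Leaf 6]; Leaf 6; Leaf 6]; Leaf 6; Node [:: Leaf 6; Leaf 6; Node [:: Leaf 6; Leaf 6; Leaf 6; Leaf 6; Leaf 0]; Leaf 6; Node [:: Leaf 6; Leaf 6; Leaf 5; Leaf 6; Leaf 6]]; Leaf 6]; Node [:: Leaf 6; Leaf 6; Leaf 6; Node [:: Leaf 6; Leaf 6; Leaf 6; Node [:: Leaf 6; Leaf 6; Leaf 6; Leaf 4; Leaf 6]; Leaf 6]; Leaf 6]; Leaf 6]; Leaf 6; Node [:: Node [:: Leaf 6; Leaf 6; Leaf 6; Node [:: Leaf 6; Leaf 6; Node [:: Leaf 6; Leaf 6; Leaf 5; Leaf 6; Leaf 6]; Leaf 6; Leaf 6]; Leaf 6]; Node [:: Leaf 6; Node [:: Leaf 6; Node [:: Leaf 6; Leaf 4; Leaf 6; Leaf 6; Leaf 6]; Leaf 6; Leaf 6; Leaf 6]; Leaf 6; Node [:: Leaf 6; Node [:: Leaf 6; Leaf 6; Leaf 6; Leaf 4; Leaf 6]; Leaf 6; Node [:: Leaf 6; Leaf 4; Leaf 6; Leaf 6; Leaf 6]; Leaf 6]; Leaf 6]; Node [:: Leaf 6;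 Node [:: Node [:: Leaf 6; Leaf 6; Leaf 5; Leaf 6; Leaf 6]; Leaf 6; Node [:: Leaf 0; Leaf 6; Leaf 6; Leaf 6; Leaf 6]; Leaf 6; Leaf 6]; Leaf 6; Node [:: Leaf 6; Leaf 6; Node [:: Leaf 6; Leaf 6; Leaf 5; Leaf 6; Leaf 6]; Leaf 6; Leaf 6]; Leaf 6]; Node [:: Leaf 6; Node [:: Leaf 6; Node [:: Leaf 6; Leaf 4; Leaf 6; Leaf 6; Leaf 6]; Leaf 6; Leaf 6; Leaf 6]; Leaf 6; Leaf 6; Leaf 6]; Leaf 6]; Leaf 6]; Node [:: Leaf 6; Node [:: Leaf 6; Node [:: Node [:: Leaf 6; Node [:: Leaf 6; Leaf 5; Leaf 6; Leaf 6; Leaf 6]; Leaf 6; Leaf 6; Leaf 6]; Leaf 6; Node [:: Leaf 6; Node [:: Leaf 6; Leaf 6; Leaf 6; Leaf 5; Leaf 6]; Leaf 6; Node [:: Leaf 6; Leaf 5; Leaf 6; Leaf 6; Leaf 6]; Leaf 6]; Leaf 6; Leaf 6]; Leaf 6; Node [:: Leaf 6; Leaf 6; Node [:: Leaf 6; Node [:: Leaf 6; Leaf 6; Leaf 6; Leaf 5; Leaf 6]; Leaf 6; Node [:: Leaf 6; Leaf 5; Leaf 6; Leaf 6; Leaf 6]; Leaf 6]; Leaf 6; Node [:: Leaf 6; Leaf 6; Leaf 6; Node [:: Leaf 6; Leaf 6; Leaf 6; Leaf 5; Leaf 6]; Leaf 6]]; Leaf 6]; Leaf 6; Node [:: Leaf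 6; Node [:: Leaf 6; Leaf 6; Node [:: Leaf 6; Node [:: Leaf 6; Leaf 6; Leaf 6; Leaf 5; Leaf 6]; Leaf 6; Node [:: Leaf 6; Leaf 5; Leaf 6; Leaf 6; Leaf 6]; Leaf 6]; Leaf 6; Node [:: Leaf 6; Leaf 6; Leaf 6; Node [:: Leaf 6; Leaf 6; Leaf 6; Leaf 5; Leaf 6]; Leaf 6]]; Leaf 6; Node [:: Node [:: Leaf 6; Node [:: Leaf 6; Leaf 5; Leaf 6; Leaf 6; Leaf 6]; Leaf 6; Leaf 6; Leaf 6]; Leaf 6; Node [:: Leaf 6; Node [:: Leaf 6; Leaf 6; Leaf 6; Leaf 5; Leaf 6]; Leaf 6; Node [:: Leaf 6; Leaf 5; Leaf 6; Leaf 6; Leaf 6]; Leaf 6]; Leaf 6; Leaf 6]; Leaf 6]; Leaf 6]; Node [:: Leaf 6; Node [:: Leaf 6; Node [:: Leaf 6; Node [:: Leaf 6; Node [:: Leaf 6; Leaf 4; Leaf 6; Leaf 6; Leaf 6]; Leaf 6; Leaf 6; Leaf 6]; Leaf 6; Leaf 6; Leaf 6]; Node [:: Leaf 6; Node [:: Node [:: Leaf 6; Leaf 6; Leaf 5; Leaf 6; Leaf 6]; Leaf 6; Node [:: Leaf 0; Leaf 6; Leaf 6; Leaf 6; Leaf 6]; Leaf 6; Leaf 6]; Leaf 6; Node [:: Leaf 6; Leaf 6; Node [:: Leaf 6; Leaf 6; Leaf 5; Leaf 6; Leaf 6]; Leaf 6; Leaf 6]; Leaf 6]; Node [:: Leaf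 6; Node [:: Leaf 6; Node [:: Leaf 6; Leaf 4; Leaf 6; Leaf 6; Leaf 6]; Leaf 6; Leaf 6; Leaf 6]; Leaf 6; Node [:: Leaf 6; Node [:: Leaf 6; Leaf 6; Leaf 6; Leaf 4; Leaf 6]; Leaf 6; Node [:: Leaf 6; Leaf 4; Leaf 6; Leaf 6; Leaf 6]; Leaf 6]; Leaf 6]; Node [:: Leaf 6; Leaf 6; Leaf 6; Node [:: Leaf 6; Leaf 6; Node [:: Leaf 6; Leaf 6; Leaf 5; Leaf 6; Leaf 6]; Leaf 6; Leaf 6]; Leaf 6]]; Leaf 6; Node [:: Leaf 6; Node [:: Leaf 6; Leaf 6; Leaf 6; Node [:: Leaf 6; Leaf 6; Leaf 6; Node [:: Leaf 6; Leaf 6; Leaf 6; Leaf 4; Leaf 6]; Leaf 6]; Leaf 6]; Node [:: Leaf 6; Node [:: Leaf 6; Leaf 6; Node [:: Leaf 6; Leaf 6; Leaf 5; Leaf 6; Leaf 6]; Leaf 6; Leaf 6]; Leaf 6; Node [:: Leaf 6; Leaf 6; Node [:: Leaf 6; Leaf 6; Leaf 6; Leaf 6; Leaf 0]; Leaf 6; Node [:: Leaf 6; Leaf 6; Leaf 5; Leaf 6; Leaf 6]]; Leaf 6]; Node [:: Leaf 6; Node [:: Leaf 6; Node [:: Leaf 6; Leaf 6; Leaf 6; Leaf 4; Leaf 6]; Leaf 6; Node [:: Leaf 6; Leaf 4; Leaf 6; Leaf 6; Leaf 6]; Leaf 6]; Leaf 6; Node [:: Leaf 6; Leaf 6; Leaf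 6; Node [:: Leaf 6; Leaf 6; Leaf 6; Leaf 4; Leaf 6]; Leaf 6]; Leaf 6]; Node [:: Leaf 6; Node [:: Leaf 6; Leaf 6; Node [:: Leaf 6; Leaf 6; Leaf 5; Leaf 6; Leaf 6]; Leaf 6; Leaf 6]; Leaf 6; Leaf 6; Leaf 6]]; Leaf 6]; Node [:: Leaf 6; Node [:: Leaf 6; Leaf 6; Leaf 6; Node [:: Leaf 6; Leaf 6; Node [:: Leaf 6; Node [:: Leaf 6; Leaf 0; Leaf 6; Leaf 6; Leaf 6]; Leaf 6; Leaf 6; Leaf 6]; Leaf 6; Leaf 6]; Leaf 6]; Leaf 6; Node [:: Leaf 6; Leaf 6; Leaf 6; Node [:: Leaf 6; Leaf 6; Node [:: Leaf 6; Leaf 6; Leaf 6; Node [:: Leaf 6; Leaf 6; Leaf 6; Leaf 0; Leaf 6]; Leaf 6]; Leaf 6; Leaf 6]; Leaf 6]; Leaf 6]]; Node [:: Node [:: Leaf 6; Leaf 6; Node [:: Leaf 6; Node [:: Leaf 6; Node [:: Leaf 6; Leaf 6; Node [:: Leaf 6; Leaf 6; Leaf 0; Leaf 6; Leaf 6]; Leaf 6; Leaf 6]; Leaf 6; Leaf 6; Leaf 6]; Leaf 6; Leaf 6; Leaf 6]; Node [:: Leaf 6; Node [:: Leaf 6; Node [:: Leaf 6; Node [:: Leaf 6; Leaf 1; Leaf 6; Leaf 6; Leaf 6]; Leaf 6; Leaf 6; Leaf 6]; Leaf 6; Leaf 6; Leaf 6]; Leaf 6; Leaf 6; Leaf 6];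 Leaf 6]; Node [:: Leaf 6; Node [:: Leaf 6; Node [:: Leaf 6; Node [:: Leaf 6; Leaf 6; Node [:: Leaf 6; Leaf 6; Leaf 4; Leaf 6; Leaf 6]; Leaf 6; Leaf 6]; Leaf 6; Leaf 6; Leaf 6]; Node [:: Leaf 6; Leaf 6; Node [:: Leaf 6; Leaf 6; Leaf 6; Node [:: Leaf 6; Leaf 6; Leaf 6; Leaf 2; Leaf 6]; Leaf 6]; Leaf 6; Leaf 6]; Leaf 6; Leaf 6]; Node [:: Node [:: Leaf 6; Node [:: Leaf 6; Node [:: Leaf 6; Leaf 3; Leaf 6; Leaf 6; Leaf 6]; Leaf 6; Leaf 6; Leaf 6]; Leaf 6; Leaf 6; Leaf 6]; Node [:: Node [:: Leaf 6; Node [:: Leaf 6; Leaf 3; Leaf 6; Leaf 6; Leaf 6]; Leaf 6; Leaf 6; Leaf 6]; Leaf 6; Node [:: Leaf 6; Node [:: Leaf 6; Leaf 6; Leaf 6; Leaf 2; Leaf 6]; Leaf 6; Node [:: Leaf 6; Leaf 3; Leaf 6; Leaf 6; Leaf 6]; Leaf 6]; Leaf 6; Leaf 6]; Node [:: Leaf 6; Node [:: Leaf 6; Node [:: Leaf 6; Leaf 6; Leaf 6; Leaf 2; Leaf 6]; Leaf 6; Node [:: Leaf 6; Leaf 3; Leaf 6; Leaf 6; Leaf 6]; Leaf 6]; Leaf 6; Node [:: Leaf 6; Leaf 6; Leaf 6; Node [:: Leaf 6; Leaf 6; Leaf 6; Leaf 2; Leaf 6]; Leaf 6]; Leaf 6];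 Node [:: Leaf 6; Leaf 6; Node [:: Leaf 6; Leaf 6; Leaf 6; Node [:: Leaf 6; Leaf 6; Leaf 6; Leaf 2; Leaf 6]; Leaf 6]; Leaf 6; Leaf 6]; Leaf 6]; Node [:: Node [:: Leaf 6; Leaf 6; Node [:: Leaf 6; Node [:: Leaf 6; Leaf 3; Leaf 6; Leaf 6; Leaf 6]; Leaf 6; Leaf 6; Leaf 6]; Leaf 6; Leaf 6]; Node [:: Leaf 6; Node [:: Node [:: Leaf 6; Leaf 6; Leaf 4; Leaf 6; Leaf 6]; Leaf 6; Node [:: Leaf 1; Leaf 6; Leaf 6; Leaf 6; Leaf 6]; Leaf 6; Leaf 6]; Leaf 6; Node [:: Leaf 6; Leaf 6; Node [:: Leaf 6; Leaf 6; Leaf 4; Leaf 6; Leaf 6]; Leaf 6; Leaf 6]; Leaf 6]; Node [:: Node [:: Leaf 6; Node [:: Leaf 6; Leaf 3; Leaf 6; Leaf 6; Leaf 6]; Leaf 6; Leaf 6; Leaf 6]; Leaf 6; Node [:: Leaf 6; Node [:: Leaf 6; Leaf 6; Leaf 6; Leaf 2; Leaf 6]; Leaf 6; Node [:: Leaf 6; Leaf 3; Leaf 6; Leaf 6; Leaf 6]; Leaf 6]; Leaf 6; Leaf 6]; Node [:: Leaf 6; Node [:: Leaf 6; Leaf 6; Node [:: Leaf 6; Leaf 6; Leaf 4; Leaf 6; Leaf 6]; Leaf 6; Leaf 6]; Leaf 6; Leaf 6; Leaf 6]; Leaf 6]; Node [:: Leaf 6; Node [:: Leaf 6; Leaf 6;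 Node [:: Leaf 6; Node [:: Leaf 6; Leaf 3; Leaf 6; Leaf 6; Leaf 6]; Leaf 6; Leaf 6; Leaf 6]; Leaf 6; Leaf 6]; Node [:: Leaf 6; Node [:: Leaf 6; Node [:: Leaf 6; Leaf 3; Leaf 6; Leaf 6; Leaf 6]; Leaf 6; Leaf 6; Leaf 6]; Leaf 6; Leaf 6; Leaf 6]; Leaf 6; Leaf 6]]; Node [:: Leaf 6; Node [:: Leaf 6; Node [:: Leaf 6; Node [:: Leaf 6; Node [:: Leaf 6; Leaf 4; Leaf 6; Leaf 6; Leaf 6]; Leaf 6; Leaf 6; Leaf 6]; Leaf 6; Leaf 6; Leaf 6]; Leaf 6; Node [:: Leaf 6; Leaf 6; Leaf 6; Node [:: Leaf 6; Leaf 6; Leaf 6; Node [:: Leaf 6; Leaf 6; Leaf 6; Leaf 4; Leaf 6]; Leaf 6]; Leaf 6]; Leaf 6]; Node [:: Leaf 6; Node [:: Leaf 6; Node [:: Node [:: Leaf 6; Leaf 6; Leaf 5; Leaf 6; Leaf 6]; Leaf 6; Node [:: Leaf 0; Leaf 6; Leaf 6; Leaf 6; Leaf 6]; Leaf 6; Leaf 6]; Leaf 6; Node [:: Leaf 6; Leaf 6; Node [:: Leaf 6; Leaf 6; Leaf 5; Leaf 6; Leaf 6]; Leaf 6; Leaf 6]; Leaf 6]; Leaf 6; Node [:: Leaf 6; Node [:: Leaf 6; Leaf 6; Node [:: Leaf 6; Leaf 6; Leaf 5; Leaf 6; Leaf 6]; Leaf 6; Leaf 6]; Leaf 6; Node [::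 Leaf 6; Leaf 6; Node [:: Leaf 6; Leaf 6; Leaf 6; Leaf 6; Leaf 0]; Leaf 6; Node [:: Leaf 6; Leaf 6; Leaf 5; Leaf 6; Leaf 6]]; Leaf 6]; Leaf 6]; Node [:: Leaf 6; Node [:: Leaf 6; Node [:: Leaf 6; Node [:: Leaf 6; Leaf 4; Leaf 6; Leaf 6; Leaf 6]; Leaf 6; Leaf 6; Leaf 6]; Leaf 6; Node [:: Leaf 6; Node [:: Leaf 6; Leaf 6; Leaf 6; Leaf 4; Leaf 6]; Leaf 6; Node [:: Leaf 6; Leaf 4; Leaf 6; Leaf 6; Leaf 6]; Leaf 6]; Leaf 6]; Leaf 6; Node [:: Leaf 6; Node [:: Leaf 6; Node [:: Leaf 6; Leaf 6; Leaf 6; Leaf 4; Leaf 6]; Leaf 6; Node [:: Leaf 6; Leaf 4; Leaf 6; Leaf 6; Leaf 6]; Leaf 6]; Leaf 6; Node [:: Leaf 6; Leaf 6; Leaf 6; Node [:: Leaf 6; Leaf 6; Leaf 6; Leaf 4; Leaf 6]; Leaf 6]; Leaf 6]; Leaf 6]; Node [:: Leaf 6; Node [:: Leaf 6; Leaf 6; Leaf 6; Node [:: Leaf 6; Leaf 6; Node [:: Leaf 6; Leaf 6; Leaf 5; Leaf 6; Leaf 6]; Leaf 6; Leaf 6]; Leaf 6]; Leaf 6; Node [:: Leaf 6; Node [:: Leaf 6; Leaf 6; Node [:: Leaf 6; Leaf 6; Leaf 5; Leaf 6; Leaf 6]; Leaf 6; Leaf 6]; Leaf 6; Leaf 6; Leaf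 6]; Leaf 6]]; Node [:: Leaf 6; Node [:: Leaf 6; Leaf 6; Node [:: Leaf 6; Leaf 6; Node [:: Leaf 6; Node [:: Leaf 6; Leaf 2; Leaf 6; Leaf 6; Leaf 6]; Leaf 6; Leaf 6; Leaf 6]; Leaf 6; Leaf 6]; Node [:: Leaf 6; Leaf 6; Leaf 6; Node [:: Leaf 6; Leaf 6; Node [:: Leaf 6; Leaf 6; Leaf 4; Leaf 6; Leaf 6]; Leaf 6; Leaf 6]; Leaf 6]; Leaf 6]; Node [:: Leaf 6; Node [:: Leaf 6; Leaf 6; Node [:: Leaf 6; Node [:: Leaf 6; Leaf 2; Leaf 6; Leaf 6; Leaf 6]; Leaf 6; Leaf 6; Leaf 6]; Leaf 6; Leaf 6]; Node [:: Leaf 6; Node [:: Leaf 6; Node [:: Leaf 6; Leaf 2; Leaf 6; Leaf 6; Leaf 6]; Leaf 6; Leaf 6; Leaf 6]; Leaf 6; Node [:: Leaf 6; Node [:: Leaf 6; Leaf 6; Leaf 6; Leaf 3; Leaf 6]; Leaf 6; Node [:: Leaf 6; Leaf 2; Leaf 6; Leaf 6; Leaf 6]; Leaf 6]; Leaf 6]; Node [:: Leaf 6; Leaf 6; Node [:: Leaf 6; Node [:: Leaf 6; Leaf 6; Leaf 6; Leaf 3; Leaf 6]; Leaf 6; Node [:: Leaf 6; Leaf 2; Leaf 6; Leaf 6; Leaf 6]; Leaf 6]; Leaf 6; Node [:: Leaf 6; Leaf 6; Leaf 6; Node [:: Leaf 6; Leaf 6; Leaf 6; Leaf 3; Leaf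 6]; Leaf 6]]; Node [:: Leaf 6; Leaf 6; Leaf 6; Node [:: Leaf 6; Leaf 6; Leaf 6; Node [:: Leaf 6; Leaf 6; Leaf 6; Leaf 3; Leaf 6]; Leaf 6]; Leaf 6]]; Node [:: Leaf 6; Node [:: Leaf 6; Leaf 6; Leaf 6; Node [:: Leaf 6; Leaf 6; Node [:: Leaf 6; Leaf 6; Leaf 4; Leaf 6; Leaf 6]; Leaf 6; Leaf 6]; Leaf 6]; Node [:: Leaf 6; Leaf 6; Node [:: Leaf 6; Node [:: Leaf 6; Leaf 6; Leaf 6; Leaf 3; Leaf 6]; Leaf 6; Node [:: Leaf 6; Leaf 2; Leaf 6; Leaf 6; Leaf 6]; Leaf 6]; Leaf 6; Node [:: Leaf 6; Leaf 6; Leaf 6; Node [:: Leaf 6; Leaf 6; Leaf 6; Leaf 3; Leaf 6]; Leaf 6]]; Node [:: Leaf 6; Node [:: Leaf 6; Leaf 6; Node [:: Leaf 6; Leaf 6; Leaf 4; Leaf 6; Leaf 6]; Leaf 6; Leaf 6]; Leaf 6; Node [:: Leaf 6; Leaf 6; Node [:: Leaf 6; Leaf 6; Leaf 6; Leaf 6; Leaf 1]; Leaf 6; Node [:: Leaf 6; Leaf 6; Leaf 4; Leaf 6; Leaf 6]]; Leaf 6]; Node [:: Leaf 6; Leaf 6; Node [:: Leaf 6; Leaf 6; Leaf 6; Node [:: Leaf 6; Leaf 6; Leaf 6; Leaf 3; Leaf 6]; Leaf 6]; Leaf 6; Leaf 6]]; Node [:: Leaf 6; Leaf 6; Node [:: Leaf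 6; Leaf 6; Leaf 6; Node [:: Leaf 6; Leaf 6; Leaf 6; Node [:: Leaf 6; Leaf 6; Leaf 6; Leaf 3; Leaf 6]; Leaf 6]; Leaf 6]; Node [:: Leaf 6; Leaf 6; Node [:: Leaf 6; Leaf 6; Leaf 6; Node [:: Leaf 6; Leaf 6; Leaf 6; Leaf 3; Leaf 6]; Leaf 6]; Leaf 6; Leaf 6]; Leaf 6]]; Node [:: Leaf 6; Leaf 6; Node [:: Leaf 6; Leaf 6; Leaf 6; Node [:: Leaf 6; Leaf 6; Leaf 6; Node [:: Leaf 6; Leaf 6; Node [:: Leaf 6; Leaf 6; Leaf 0; Leaf 6; Leaf 6]; Leaf 6; Leaf 6]; Leaf 6]; Leaf 6]; Node [:: Leaf 6; Leaf 6; Leaf 6; Node [:: Leaf 6; Leaf 6; Leaf 6; Node [:: Leaf 6; Leaf 6; Leaf 6; Node [:: Leaf 6; Leaf 6; Leaf 6; Leaf 1; Leaf 6]; Leaf 6]; Leaf 6]; Leaf 6]; Leaf 6]]; Node [:: Leaf 6; Node [:: Leaf 6; Leaf 6; Leaf 6; Node [:: Leaf 6; Node [:: Leaf 6; Node [:: Leaf 6; Node [:: Leaf 6; Leaf 1; Leaf 6; Leaf 6; Leaf 6]; Leaf 6; Leaf 6; Leaf 6]; Leaf 6; Leaf 6; Leaf 6]; Node [:: Leaf 6; Node [:: Leaf 6; Leaf 6; Node [:: Leaf 6; Leaf 6; Leaf 0; Leaf 6; Leaf 6]; Leaf 6; Leaf 6]; Leaf 6; Leaf 6; Leaf 6]; Leaf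 6; Leaf 6]; Leaf 6]; Node [:: Leaf 6; Leaf 6; Leaf 6; Node [:: Leaf 6; Node [:: Leaf 6; Leaf 6; Node [:: Leaf 6; Node [:: Leaf 6; Leaf 0; Leaf 6; Leaf 6; Leaf 6]; Leaf 6; Leaf 6; Leaf 6]; Leaf 6; Leaf 6]; Leaf 6; Node [:: Leaf 6; Leaf 6; Node [:: Leaf 6; Leaf 6; Leaf 6; Node [:: Leaf 6; Leaf 6; Leaf 6; Leaf 0; Leaf 6]; Leaf 6]; Leaf 6; Leaf 6]; Leaf 6]; Leaf 6]; Node [:: Leaf 6; Leaf 6; Leaf 6; Node [:: Leaf 6; Leaf 6; Node [:: Leaf 6; Leaf 6; Leaf 6; Node [:: Leaf 6; Leaf 6; Node [:: Leaf 6; Leaf 6; Leaf 0; Leaf 6; Leaf 6]; Leaf 6; Leaf 6]; Leaf 6]; Node [:: Leaf 6; Leaf 6; Leaf 6; Node [:: Leaf 6; Leaf 6; Leaf 6; Node [:: Leaf 6; Leaf 6; Leaf 6; Leaf 1; Leaf 6]; Leaf 6]; Leaf 6]; Leaf 6]; Leaf 6]; Leaf 6]]; Node [:: Leaf 6; Node [:: Leaf 6; Node [:: Leaf 6; Node [:: Leaf 6; Node [:: Leaf 6; Leaf 6; Node [:: Leaf 6; Leaf 6; Node [:: Leaf 6; Leaf 6; Leaf 0; Leaf 6; Leaf 6]; Leaf 6; Leaf 6]; Node [:: Leaf 6; Leaf 6; Leaf 6; Node [:: Leaf 6; Leaf 6; Leaf 6; Leaf 1; Leaf 6]; Leaf 6];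 Leaf 6]; Leaf 6; Leaf 6; Leaf 6]; Leaf 6; Leaf 6; Leaf 6]; Node [:: Leaf 6; Node [:: Leaf 6; Leaf 6; Node [:: Leaf 6; Node [:: Leaf 6; Node [:: Leaf 6; Leaf 0; Leaf 6; Leaf 6; Leaf 6]; Leaf 6; Leaf 6; Leaf 6]; Leaf 6; Node [:: Leaf 6; Leaf 6; Leaf 6; Node [:: Leaf 6; Leaf 6; Leaf 6; Leaf 0; Leaf 6]; Leaf 6]; Leaf 6]; Leaf 6; Leaf 6]; Leaf 6; Leaf 6; Leaf 6]; Node [:: Leaf 6; Node [:: Leaf 6; Leaf 6; Leaf 6; Node [:: Leaf 6; Node [:: Leaf 6; Node [:: Leaf 6; Leaf 1; Leaf 6; Leaf 6; Leaf 6]; Leaf 6; Leaf 6; Leaf 6]; Node [:: Leaf 6; Leaf 6; Node [:: Leaf 6; Leaf 6; Leaf 0; Leaf 6; Leaf 6]; Leaf 6; Leaf 6]; Leaf 6; Leaf 6]; Leaf 6]; Leaf 6; Leaf 6; Leaf 6]; Leaf 6]; Node [:: Leaf 6; Node [:: Leaf 6; Leaf 6; Node [:: Leaf 6; Node [:: Leaf 6; Node [:: Leaf 6; Node [:: Leaf 6; Leaf 0; Leaf 6; Leaf 6; Leaf 6]; Leaf 6; Leaf 6; Leaf 6]; Leaf 6; Node [:: Leaf 6; Leaf 6; Leaf 6; Node [:: Leaf 6; Leaf 6; Leaf 6; Leaf 0; Leaf 6]; Leaf 6]; Leaf 6]; Leaf 6; Leaf 6; Leaf 6]; Leaf 6;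 Leaf 6]; Leaf 6; Node [:: Leaf 6; Leaf 6; Node [:: Leaf 6; Leaf 6; Leaf 6; Node [:: Leaf 6; Node [:: Leaf 6; Node [:: Leaf 6; Leaf 0; Leaf 6; Leaf 6; Leaf 6]; Leaf 6; Leaf 6; Leaf 6]; Leaf 6; Node [:: Leaf 6; Leaf 6; Leaf 6; Node [:: Leaf 6; Leaf 6; Leaf 6; Leaf 0; Leaf 6]; Leaf 6]; Leaf 6]; Leaf 6]; Leaf 6; Leaf 6]; Leaf 6]; Node [:: Leaf 6; Node [:: Leaf 6; Leaf 6; Leaf 6; Node [:: Leaf 6; Node [:: Leaf 6; Node [:: Leaf 6; Node [:: Leaf 6; Leaf 1; Leaf 6; Leaf 6; Leaf 6]; Leaf 6; Leaf 6; Leaf 6]; Node [:: Leaf 6; Leaf 6; Node [:: Leaf 6; Leaf 6; Leaf 0; Leaf 6; Leaf 6]; Leaf 6; Leaf 6]; Leaf 6; Leaf 6]; Leaf 6; Leaf 6; Leaf 6]; Leaf 6]; Node [:: Leaf 6; Leaf 6; Leaf 6; Node [:: Leaf 6; Leaf 6; Node [:: Leaf 6; Node [:: Leaf 6; Node [:: Leaf 6; Leaf 0; Leaf 6; Leaf 6; Leaf 6]; Leaf 6; Leaf 6; Leaf 6]; Leaf 6; Node [:: Leaf 6; Leaf 6; Leaf 6; Node [:: Leaf 6; Leaf 6; Leaf 6; Leaf 0; Leaf 6]; Leaf 6]; Leaf 6]; Leaf 6; Leaf 6]; Leaf 6]; Node [:: Leaf 6; Leaf 6; Leaf 6; Node [::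 Leaf 6; Leaf 6; Leaf 6; Node [:: Leaf 6; Leaf 6; Node [:: Leaf 6; Leaf 6; Node [:: Leaf 6; Leaf 6; Leaf 0; Leaf 6; Leaf 6]; Leaf 6; Leaf 6]; Node [:: Leaf 6; Leaf 6; Leaf 6; Node [:: Leaf 6; Leaf 6; Leaf 6; Leaf 1; Leaf 6]; Leaf 6]; Leaf 6]; Leaf 6]; Leaf 6]; Leaf 6]; Leaf 6]].
Definition TN : seq nat := [:: 4; 0; 2; 2; 2; 2; 2; 2; 3; 3; 3; 3; 3; 3; 3; 3; 1; 1; 1; 1; 1; 1; 1; 1].
Definition tn k := nth 0%N TN k.
Definition tvn (t : itr) : seq nat := let: (a, b, c) := t in
  [:: tn a; tn b; tn c; tn (mt a b); tn (mt a c); tn (mt b c); tn (mt (mt a b) c); tn (mt (mt a c) b)].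
Definition clsf v := lookup v TR.
Definition alltr := flatten [seq [seq (a, b, c) | b <- I24, c <- I24] | a <- I24]%N.

Definition check_tn := all (fun r => (tn r)%:Z - 2 == ta r) I24.
Definition check_gl := all (fun k => (inv (inv k) == k)) I24.
Definition check_reps := [&& uniq (map tvn (flatten iblocks)),
  all (fun r => validt r && fullgen r) (flatten iblocks),
  all (fun r => validt r && fullgen r) roots &
  all (fun i => all (fun r => clsf (tvn r) == i) (nth [::] iblocks i)) (iota 0 6)].
Definition forall3 (P : itr -> bool) := all (fun a => all (fun b => all (fun c => P (a, b, c)) I24) I24) I24.
Definition check_C1 := forall3 (fun t => genb t ==> all (fun s => clsf (tvn s) == clsf (tvn t)) (stepimgs t)).
Definition check_C2 := forall3 (fun t => genb t ==> memt (canon t) (flatten iblocks)).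

Lemma check_basic : [&& check_mt, check_inv, check_cj, check_inj, check_MS, check_tn & check_gl].
Proof. vm_cast_no_check (erefl true). Qed.
Lemma check_sizes : map size iblocks = [:: 96; 32; 48; 72; 128; 144]%N.
Proof. vm_cast_no_check (erefl (map size iblocks)). Qed.
Lemma check_reps_ok : check_reps.
Proof. vm_cast_no_check (erefl true). Qed.
Lemma check_C1_ok : check_C1.
Proof. vm_cast_no_check (erefl true). Qed.
Lemma check_C2_ok : check_C2.
Proof. vm_cast_no_check (erefl true). Qed.

Lemma ck_mt : check_mt. Proof. by move: check_basic => /and5P [? ? ? ? /andP [? ?]]. Qed.
Lemma ck_inv : check_inv. Proof. by move: check_basic => /and5P [? ? ? ? /andP [? ?]]. Qed.
Lemma ck_cj : check_cj. Proof. by move: check_basic => /and5P [? ? ? ? /andP [? ?]]. Qed.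
Lemma ck_inj : check_inj. Proof. by move: check_basic => /and5P [? ? ? ? /andP [? ?]]. Qed.
Lemma ck_MS : check_MS. Proof. by move: check_basic => /and5P [? ? ? ? /andP [? ?]]. Qed.
Lemma ck_tn : check_tn. Proof. by move: check_basic => /and5P [? ? ? ? /andP [? ?]]. Qed.
Lemma ck_gl : check_gl. Proof. by move: check_basic => /and5P [? ? ? ? /andP [? ?]]. Qed.

Lemma mk2_det a b c d : \det (mk2 a b c d) = a * d - b * c.
Proof.
rewrite (expand_det_row _ 0) !big_ord_recl big_ord0 /cofactor !det_mx11 !mxE /=.
rewrite addr0 /= expr0 expr1 mul1r mulN1r mulrN.
done.
Qed.

Lemma mk2_tr a b c d : \tr (mk2 a b c d) = a + d.
Proof. by rewrite /mxtrace !big_ord_recl big_ord0 !mxE /= addr0. Qed.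

Lemma two_neq0 : (2%:R : C) != 0.
Proof. by rewrite pnatr_eq0. Qed.

Definition emb k : mat2 := (2%:R^-1 : C) *: E4 (gq k).

Lemma E4_scale2 x : E4 (scale2 x) = 2%:R *: E4 x.
Proof.
case: x => [[[a b] c] d]; rewrite /scale2 !E4E mk2_scale; apply: mk2_eq;
  rewrite ?rmorphMn /=; ring.
Qed.

Lemma E4_tr x : \tr (E4 x) = 2%:R * (x.1.1.1)%:~R.
Proof. case: x => [[[a b] c] d]; rewrite E4E mk2_tr /=; ring. Qed.

Lemma E4_det x : \det (E4 x) =
  let: (a, b, c, d) := x in (a*a + b*b + c*c + d*d)%:~R.
Proof.
case: x => [[[a b] c] d]; rewrite E4E mk2_det /= ?rmorphD ?rmorphM /=; ring: ii.
Qed.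

Lemma mt_lt k l : (k < 24)%N -> (l < 24)%N -> (mt k l < 24)%N.
Proof. by move=> hk hl; have := allP (allP ck_mt k _) l; rewrite !mem_iota => /(_ hk hl) /andP[]. Qed.

Lemma mt_eq k l : (k < 24)%N -> (l < 24)%N -> hm (gq k) (gq l) = scale2 (gq (mt k l)).
Proof. by move=> hk hl; have := allP (allP ck_mt k _) l; rewrite !mem_iota => /(_ hk hl) /andP[_ /eqP]. Qed.

Lemma emb_mul k l : (k < 24)%N -> (l < 24)%N -> emb k *m emb l = emb (mt k l).
Proof.
move=> hk hl; rewrite /emb -scalemxAl -scalemxAr E4M mt_eq // E4_scale2 !scalerA.
by rewrite -mulrA mulVf ?two_neq0 // mulr1.
Qed.

Lemma inv_lt k : (k < 24)%N -> (inv k < 24)%N.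
Proof. by move=> hk; have := allP ck_inv k; rewrite mem_iota => /(_ hk) /andP[]. Qed.
Lemma mt_inv k : (k < 24)%N -> mt k (inv k) = 0%N.
Proof. by move=> hk; have := allP ck_inv k; rewrite mem_iota => /(_ hk) /andP[_ /eqP]. Qed.

Lemma emb0 : emb 0 = 1.
Proof.
rewrite /emb /gq /= /E4 !scale0r !addr0 scalerA.
have -> : (Posz 2)%:~R = (2%:R : C) by [].
by rewrite mulVf ?two_neq0 // scale1r.
Qed.

Lemma emb1 : emb 1 = -1.
Proof.
rewrite /emb /gq /= /E4 !scale0r !addr0 scalerA.
have -> : (Negz 1)%:~R = - (2%:R : C) by [].
by rewrite mulrN mulVf ?two_neq0 // scaleN1r.
Qed.

Lemma inv_right (A B : mat2) : A *m B = 1 -> invmx A = B.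
Proof.
move=> AB; have AB' : A *m B = 1%:M := AB.
have [uA _] := mulmx1_unit AB'.
by rewrite -[invmx A]mulmx1 -AB' mulmxA mulVmx // mul1mx.
Qed.

Lemma emb_inv k : (k < 24)%N -> invmx (emb k) = emb (inv k).
Proof. by move=> hk; apply: inv_right; rewrite emb_mul ?inv_lt // mt_inv // emb0. Qed.

Lemma emb_unit k : (k < 24)%N -> emb k \in unitmx.
Proof.
move=> hk; have := emb_mul hk (inv_lt hk); rewrite mt_inv // emb0 => /mulmx1_unit[] //.
Qed.

Lemma emb_tr k : \tr (emb k) = (ta k)%:~R.
Proof. by rewrite /emb mxtraceZ E4_tr mulrA mulVf ?two_neq0 // mul1r. Qed.

Lemma emb_inj k l : (k < 24)%N -> (l < 24)%N -> emb k = emb l -> k = l.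
Proof.
move=> hk hl e.
have h1 : emb (mt k (inv l)) = 1.
  by rewrite -emb_mul ?inv_lt // e emb_mul ?inv_lt // mt_inv // emb0.
have : ta (mt k (inv l)) = 2.
  apply/eqP; rewrite -(eqr_int C) -emb_tr h1 mxtrace1 //.
have := allP (allP ck_inj k _) l; rewrite !mem_iota => /(_ hk hl) /implyP H /eqP /H /eqP //.
Qed.

Lemma zP1 : (Posz 1)%:~R = 1 :> C. Proof. by []. Qed.
Lemma zN1 : (Negz 0)%:~R = -1 :> C. Proof. by []. Qed.
Lemma zP0 : (Posz 0)%:~R = 0 :> C. Proof. by []. Qed.
Lemma zP2 : (Posz 2)%:~R = 2%:R :> C. Proof. by []. Qed.
Lemma zN2 : (Negz 1)%:~R = - 2%:R :> C. Proof. by []. Qed.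

Lemma half2 (M : mat2) : (2%:R^-1 : C) *: (2%:R *: M) = M.
Proof. by rewrite scalerA mulVf ?two_neq0 // scale1r. Qed.
Lemma half2N (M : mat2) : (2%:R^-1 : C) *: (- 2%:R *: M) = - M.
Proof. by rewrite scaleNr scalerN half2. Qed.


Lemma hA (M : mat2) : (2%:R^-1 : C) *: (2%:R *: M + 0 + 0 + 0) = M.
Proof. by rewrite !addr0 half2. Qed.
Lemma hB (M : mat2) : (2%:R^-1 : C) *: (0 + 2%:R *: M + 0 + 0) = M.
Proof. by rewrite !addr0 add0r half2. Qed.
Lemma hC (M : mat2) : (2%:R^-1 : C) *: (0 + 0 + 2%:R *: M + 0) = M.
Proof. by rewrite !addr0 add0r half2. Qed.
Lemma hD (M : mat2) : (2%:R^-1 : C) *: (0 + 0 + 0 + 2%:R *: M) = M.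
Proof. by rewrite !add0r half2. Qed.
Lemma hAN (M : mat2) : (2%:R^-1 : C) *: (- 2%:R *: M + 0 + 0 + 0) = - M.
Proof. by rewrite !addr0 half2N. Qed.
Lemma hBN (M : mat2) : (2%:R^-1 : C) *: (0 + - 2%:R *: M + 0 + 0) = - M.
Proof. by rewrite !addr0 add0r half2N. Qed.
Lemma hCN (M : mat2) : (2%:R^-1 : C) *: (0 + 0 + - 2%:R *: M + 0) = - M.
Proof. by rewrite !addr0 add0r half2N. Qed.
Lemma hDN (M : mat2) : (2%:R^-1 : C) *: (0 + 0 + 0 + - 2%:R *: M) = - M.
Proof. by rewrite !add0r half2N. Qed.

Lemma cons_eq (x y : mat2) s t : x = y -> s = t -> x :: s = y :: t.
Proof. by move=> -> ->. Qed.
Ltac splitl := lazymatch goal with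
  | |- _ :: _ = _ :: _ => apply: cons_eq; [ | splitl ]
  | |- _ => idtac end.

Lemma BT_emb : binary_tetrahedral = map emb I24.
Proof.
rewrite /binary_tetrahedral.
cbn [allpairs_dep map cat flatten foldr fst snd sgn iota I24].
rewrite /emb /gq; cbn [nth Gl]; rewrite /E4.
rewrite !zP1 !zN1 !zP0 !zP2 !zN2 !scale0r.
splitl.
all: lazymatch goal with
  | |- _ = _ *: (- _ *: _ + 0 + 0 + 0) => exact: (esym (hAN _))
  | |- _ = _ *: (0 + - _ *: _ + 0 + 0) => exact: (esym (hBN _))
  | |- _ = _ *: (0 + 0 + - _ *: _ + 0) => exact: (esym (hCN _))
  | |- _ = _ *: (0 + 0 + 0 + - _ *: _) => exact: (esym (hDN _))
  | |- _ = _ *: (_ *: _ + 0 + 0 + 0) => exact: (esym (hA _))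
  | |- _ = _ *: (0 + _ *: _ + 0 + 0) => exact: (esym (hB _))
  | |- _ = _ *: (0 + 0 + _ *: _ + 0) => exact: (esym (hC _))
  | |- _ = _ *: (0 + 0 + 0 + _ *: _) => exact: (esym (hD _))
  | |- _ => reflexivity
  end.
Qed.

Lemma GammaP M : Gamma M <-> exists2 k, (k < 24)%N & M = emb k.
Proof.
rewrite /Gamma BT_emb; split => [/mapP[k]|[k hk ->]].
  by rewrite mem_iota => /andP[_ hk] ->; exists k.
by apply: map_f; rewrite mem_iota.
Qed.

Definition E (t : itr) : triple := let: (a, b, c) := t in (emb a, emb b, emb c).

Lemma hasE a (H : seq nat) : has (eqn a) H = (a \in H).
Proof. by elim: H => [|x H IH] //=; rewrite inE IH. Qed.

Lemma gen_sub (P : nat -> Prop) a b c X :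
  P 0%N -> P a -> P b -> P c ->
  (forall k, P k -> (k < 24)%N) ->
  (forall k l, P k -> P l -> P (mt k l)) -> (forall k, P k -> P (inv k)) ->
  gen_by (emb a) (emb b) (emb c) X -> exists2 h, P h & X = emb h.
Proof.
move=> P0 Pa Pb Pc Plt Pmt Pinv; elim => [|G Y hG _ [h Ph ->]].
  by exists 0%N => //; rewrite emb0.
have [g Pg ->] : exists2 g, P g & G = emb g.
  have Hi : forall x, P x -> exists2 g, P g & invmx (emb x) = emb g.
    by move=> x Px; exists (inv x); [apply: Pinv | rewrite emb_inv //; apply: Plt].
  case: hG => [->|[->|[->|[->|[->|->]]]]]; [by exists a|by exists b|by exists c|exact: Hi Pa|exact: Hi Pb|exact: Hi Pc].
by exists (mt g h); [apply: Pmt | rewrite emb_mul; eauto].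
Qed.

Lemma gen_lt a b c X : (a < 24)%N -> (b < 24)%N -> (c < 24)%N ->
  gen_by (emb a) (emb b) (emb c) X -> exists2 h, (h < 24)%N & X = emb h.
Proof.
move=> ha hb hc; apply: (@gen_sub (fun k => (k < 24)%N)) => //.
- by move=> k l; apply: mt_lt.
- by move=> k; apply: inv_lt.
Qed.

Lemma MS_lt : all (all (fun h => (h < 24)%N)) MS.
Proof. by []. Qed.

Lemma not_gen t : validt t -> ingroup t -> ~ generates_Gamma (E t).
Proof.
case: t => [[a b] c] /and3P[ha hb hc] /hasP[H HMS] /and3P[].
rewrite !hasE => aH bH cH [_ _ _ HG].
have /and4P[H0 Hmt Hinv /allPn[k]] := allP ck_MS H HMS.
rewrite mem_iota /= => hk kH.
have Hlt : forall x, x \in H -> (x < 24)%N by move=> x xH; exact: (allP (allP MS_lt H HMS)).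
have Hmt' : forall x y, x \in H -> y \in H -> mt x y \in H by move=> x y xH yH; exact: (allP (allP Hmt x xH) y yH).
have Hinv' : forall x, x \in H -> inv x \in H by move=> x xH; exact: (allP Hinv x xH).
have Hg : gen_by (emb a) (emb b) (emb c) (emb k) by apply/HG/GammaP; exists k.
have [h hH ekh] := @gen_sub (fun k => k \in H) a b c (emb k) H0 aH bH cH Hlt Hmt' Hinv' Hg.
have hlt : (h < 24)%N by exact: (allP (allP MS_lt H HMS)).
by move: kH; rewrite (emb_inj hk hlt ekh) hH.
Qed.

Lemma emb_left g k : (g < 24)%N -> (k < 24)%N -> emb g *m emb (mt (inv g) k) = emb k.
Proof.
move=> hg hk; rewrite -emb_mul ?inv_lt // mulmxA emb_mul ?inv_lt // mt_inv // emb0 mul1mx //.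
Qed.

Lemma cloS t n S : clo t n.+1 S = if all id S then true else clo t n (gstep t S).
Proof. by []. Qed.
Lemma gstepE a b c S : gstep (a, b, c) S =
  [seq bget S k || has (fun g => bget S (mt (inv g) k)) [:: a; b; c] | k <- I24].
Proof. by []. Qed.
Lemma clo0 t S : clo t 0 S = if all id S then true else false.
Proof. by []. Qed.

Lemma clo_ok a b c n S : (a < 24)%N -> (b < 24)%N -> (c < 24)%N -> size S = 24%N ->
  (forall k, (k < 24)%N -> bget S k -> gen_by (emb a) (emb b) (emb c) (emb k)) ->
  clo (a, b, c) n S -> forall k, (k < 24)%N -> gen_by (emb a) (emb b) (emb c) (emb k).
Proof.
move=> ha hb hc; elim: n S => [|n IH] S hS HS; rewrite ?cloS ?clo0.
  by case: ifP => // /allP Hall _ k hk; apply: HS => //; apply: Hall; rewrite mem_nth ?hS.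
case: ifP => [/allP Hall _ k hk|_]; first by apply: HS => //; apply: Hall; rewrite mem_nth ?hS.
apply: IH; first by rewrite /gstep size_map size_iota.
move=> k hk; rewrite /bget gstepE (nth_map 0%N) ?size_iota // nth_iota // add0n.
case/orP => [hb0|]; first by apply: HS.
rewrite /= orbF.
case/or3P => [hg|hg|hg]; [rewrite -(emb_left ha hk)|rewrite -(emb_left hb hk)|rewrite -(emb_left hc hk)];
  apply: gen_mul; auto; apply: HS => //; apply: mt_lt => //; apply: inv_lt; done.
Qed.

Lemma gen_full a b c : (a < 24)%N -> (b < 24)%N -> (c < 24)%N -> fullgen (a, b, c) ->
  generates_Gamma (E (a, b, c)).
Proof.
move=> ha hb hc hf.
have Hall := clo_ok ha hb hc (S := binit) (n := 7).
have {Hall}Hall : forall k, (k < 24)%N -> gen_by (emb a) (emb b) (emb c) (emb k).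
  apply: Hall => //.
  move=> k hk; rewrite /bget /binit (nth_map 0%N) ?size_iota // nth_iota // add0n.
  by move/eqnP => ->; rewrite emb0; apply: gen_one.
split; [by apply/GammaP; exists a|by apply/GammaP; exists b|by apply/GammaP; exists c|].
move=> X; split => [/gen_lt [] // h hh ->|/GammaP [k hk ->]]; last exact: Hall.
by apply/GammaP; exists h.
Qed.

Ltac lt24 := repeat (first [assumption | apply: mt_lt | apply: inv_lt]).

Lemma gen_idx T : generates_Gamma T -> exists t, [/\ validt t, T = E t & genb t].
Proof.
case: T => [[M1 M2 M3]] [/GammaP[a ha ->] /GammaP[b hb ->] /GammaP[c hc ->] H].
have vt : validt (a, b, c) by rewrite /= ha hb hc.
exists (a, b, c); split => //; apply/negP => ing.
apply: (not_gen vt ing); split; [by apply/GammaP; exists a|by apply/GammaP; exists b|by apply/GammaP; exists c|exact: H].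
Qed.

Lemma E_inj t t' : validt t -> validt t' -> E t = E t' -> t = t'.
Proof.
case: t => [[a b] c]; case: t' => [[a' b'] c'] /and3P[ha hb hc] /and3P[ha' hb' hc'] [].
by move=> /emb_inj -> // /emb_inj -> // /emb_inj -> //.
Qed.

Lemma om1E t : validt t -> omega1 (E t) = E (om1 t) /\ validt (om1 t).
Proof.
case: t => [[a b] c] /and3P[ha hb hc] /=.
rewrite emb_mul // emb_inv // emb_mul; try by lt24.
by split => //; apply/and3P; split; lt24.
Qed.

Lemma om2E t : validt t -> omega2 (E t) = E (om2 t) /\ validt (om2 t).
Proof.
case: t => [[a b] c] /and3P[ha hb hc] /=.
rewrite emb_mul // emb_inv // emb_mul; try by lt24.
by split => //; apply/and3P; split; lt24.
Qed.

Lemma om3E t : validt t -> omega3 (E t) = E (om3 t) /\ validt (om3 t).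
Proof.
case: t => [[a b] c] /and3P[ha hb hc] /=.
rewrite emb_mul // emb_mul; try by lt24. rewrite emb_inv; try by lt24.
by split => //; apply/and3P; split; lt24.
Qed.

Lemma sgnkE e k : (k < 24)%N -> sgn e *: emb k = emb (sgnk e k) /\ (sgnk e k < 24)%N.
Proof.
move=> hk; case: e => /=; last by rewrite scale1r.
rewrite /neg -emb_mul // emb1 mulmxN mulmx1 scaleN1r; split => //; exact: mt_lt.
Qed.

Lemma sgntE e1 e2 e3 t : validt t ->
  (let: (M1, M2, M3) := E t in (sgn e1 *: M1, sgn e2 *: M2, sgn e3 *: M3)) = E (sgnt e1 e2 e3 t)
  /\ validt (sgnt e1 e2 e3 t).
Proof.
case: t => [[a b] c] /and3P[ha hb hc] /=.
have [-> ->] := sgnkE e1 ha; have [-> ->] := sgnkE e2 hb; have [-> ->] := sgnkE e3 hc; done.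
Qed.

Definition qn (x : Q) : int := let: (a, b, c, d) := x in a*a + b*b + c*c + d*d.
Lemma Ul_nz : all (fun u => qn u != 0) Ul.
Proof. by vm_compute. Qed.

Lemma cj_lt u k : (u < size Ul)%N -> (k < 24)%N -> (cj u k < 24)%N.
Proof.
move=> hu hk; have := allP (allP ck_cj u _) k; rewrite !mem_iota => /(_ hu hk) /andP[] //.
Qed.
Lemma cj_eq u k : (u < size Ul)%N -> (k < 24)%N ->
  hm (nth q0 Ul u) (gq k) = hm (gq (cj u k)) (nth q0 Ul u).
Proof.
move=> hu hk; have := allP (allP ck_cj u _) k; rewrite !mem_iota => /(_ hu hk) /andP[_ /eqP] //.
Qed.

Lemma conj_u u : (u < size Ul)%N -> exists2 P, SL2 P &
  forall k, (k < 24)%N -> P *m emb k *m invmx P = emb (cj u k).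
Proof.
move=> hu; set x := nth q0 Ul u; set A := E4 x.
have hx : qn x != 0 by apply: (allP Ul_nz); rewrite mem_nth.
have dA : \det A = (qn x)%:~R by rewrite /A E4_det; case: (x) => [[[? ?] ?] ?].
have dnz : \det A != 0 by rewrite dA intr_eq0.
set c := sqrtC ((\det A)^-1).
have c2 : c ^+ 2 = (\det A)^-1 by rewrite sqrtCK.
have cnz : c != 0 by apply/negP => /eqP c0; move: c2; rewrite c0 expr0n /= => /esym/eqP; rewrite invr_eq0 (negbTE dnz).
have uA : A \in unitmx by rewrite unitmxE unitfE.
have SP : SL2 (c *: A) by rewrite /SL2 detZ c2 mulVf.
have uP : c *: A \in unitmx by rewrite unitmxE SP unitr1.
exists (c *: A) => // k hk.
have AX : A *m emb k = emb (cj u k) *m A.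
  by rewrite /emb -scalemxAr -scalemxAl /A !E4M cj_eq.
rewrite invmxZ // -scalemxAl -scalemxAr -scalemxAl scalerA mulVf // scale1r AX mulmxK //.
Qed.

Definition tvm (T : triple) : seq C := let: (M1, M2, M3) := T in
  [:: \tr M1; \tr M2; \tr M3; \tr (M1 *m M2); \tr (M1 *m M3); \tr (M2 *m M3);
      \tr (M1 *m M2 *m M3); \tr (M1 *m M3 *m M2)].

Lemma conj_trE (P X : mat2) : P \in unitmx -> \tr (P *m X *m invmx P) = \tr X.
Proof. by move=> uP; rewrite mxtrace_mulC mulmxA mulVmx // mul1mx. Qed.

Lemma conj_mulE (P X Y : mat2) : P \in unitmx ->
  (P *m X *m invmx P) *m (P *m Y *m invmx P) = P *m (X *m Y) *m invmx P.
Proof. by move=> uP; rewrite !mulmxA -[P *m X *m invmx P *m P]mulmxA mulVmx // mulmx1. Qed.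

Lemma tvm_conj P T : SL2 P -> tvm (conj_triple P T) = tvm T.
Proof.
move=> SP; have uP : P \in unitmx by rewrite unitmxE SP unitr1.
case: T => [[M1 M2 M3]] /=; rewrite !conj_mulE // !conj_trE //.
Qed.

Lemma tr_emb k : (k < 24)%N -> \tr (emb k) = (tn k)%:R - 2%:R.
Proof.
move=> hk; rewrite emb_tr; have := allP ck_tn k; rewrite mem_iota => /(_ hk) /eqP <-.
by rewrite rmorphB.
Qed.

Lemma tvm_E t : validt t -> tvm (E t) = map (fun n => (n%:R : C) - 2%:R) (tvn t).
Proof.
case: t => [[a b] c] /and3P[ha hb hc] /=.
rewrite !emb_mul; try by lt24.
by rewrite !tr_emb; try by lt24.
Qed.

Lemma tvn_inj t t' : validt t -> validt t' -> tvm (E t) = tvm (E t') -> tvn t = tvn t'.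
Proof.
move=> vt vt'; rewrite !tvm_E //; apply: inj_map => n m /addIr /eqP.
by rewrite eqr_nat => /eqP.
Qed.

Lemma canon_fold t l m : (m = t \/ exists2 u, (u < size Ul)%N & m = cjt u t) ->
  (forall u, u \in l -> (u < size Ul)%N) ->
  let r := foldl (fun m u => let s := cjt u t in if ltt s m then s else m) m l in
  r = t \/ exists2 u, (u < size Ul)%N & r = cjt u t.
Proof.
elim: l m => [|u l IH] m Hm Hl //=.
apply: IH; last by move=> v hv; apply: Hl; rewrite inE hv orbT.
case: ifP => _ //; right; exists u => //; apply: Hl; exact: mem_head.
Qed.

Lemma canonP t : canon t = t \/ exists2 u, (u < size Ul)%N & canon t = cjt u t.
Proof. by apply: canon_fold; [left|move=> u; rewrite mem_iota]. Qed.

Lemma conj_cjt u t : (u < size Ul)%N -> validt t ->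
  conj_equiv (E t) (E (cjt u t)) /\ validt (cjt u t).
Proof.
move=> hu; case: t => [[a b] c] /and3P[ha hb hc].
have [P SP HP] := conj_u hu.
split; first by exists P => //=; rewrite !HP.
by apply/and3P; split; apply: cj_lt.
Qed.

Lemma conj_refl T : conj_equiv T T.
Proof.
exists 1; first by rewrite /SL2 det1.
case: T => [[M1 M2 M3]] /=.
have -> : invmx (1 : mat2) = 1 by exact: invmx1.
by rewrite !mul1mx !mulmx1.
Qed.

Lemma conj_canon t : validt t -> conj_equiv (E t) (E (canon t)) /\ validt (canon t).
Proof.
move=> vt; case: (canonP t) => [->|[u hu ->]]; last exact: conj_cjt.
by split => //; exact: conj_refl.
Qed.

Lemma gen_full' t : validt t -> fullgen t -> generates_Gamma (E t).
Proof. by case: t => [[a b] c] /and3P[? ? ?]; apply: gen_full. Qed.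

Lemma step_geo r s : validt r -> fullgen r -> validt s -> fullgen s -> s \in stepimgs r ->
  geo_step (E r) (E s).
Proof.
move=> vr fr vs fs.
have gr := gen_full' vr fr.
have gs := gen_full' vs fs.
rewrite /stepimgs inE => /orP[/eqP es|]; first by subst s; split => //; left; case: (om1E vr) => ->.
rewrite inE => /orP[/eqP es|]; first by subst s; split => //; right; left; case: (om2E vr) => ->.
rewrite inE => /orP[/eqP es|]; first by subst s; split => //; right; right; left; case: (om3E vr) => ->.
move=> hs; split => //; right; right; right; right.
have [e1 [e2 [e3 ->]]] : exists e1 e2 e3, s = sgnt e1 e2 e3 r.
  move: hs; rewrite /B2 /= !inE.
  by case/or4P => [/eqP->|/eqP->|/eqP->|/or4P[/eqP->|/eqP->|/eqP->|/orP[/eqP->|/eqP->]]]; do 3 eexists; reflexivity.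
have [<- _] := sgntE e1 e2 e3 vr.
case: r vr {gr fr hs} => [[a b] c] _ /=.
by exists e1, e2, e3, (e1 (+) e2 (+) e3); split => //; case: e1; case: e2; case: e3.
Qed.

Lemma conj_geo s : validt s -> fullgen s -> validt (canon s) -> fullgen (canon s) ->
  geo_step (E s) (E (canon s)).
Proof.
move=> vs fs vc fc; split; [exact: gen_full' vs fs|exact: gen_full' vc fc|].
by right; right; right; left; case: (conj_canon vs).
Qed.

Lemma undupt_sub x l : x \in undupt l -> x \in l.
Proof.
elim: l => //= y l IH; case: ifP => _; first by move/IH; rewrite inE => ->; rewrite orbT.
by rewrite !inE => /orP[->|/IH ->] //; rewrite orbT.
Qed.

Definition GI r x := [/\ validt x, fullgen x & geo_equiv (E r) (E x)].

Lemma bfsS n seen front : bfs n.+1 seen front =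
  let nw := undupt [seq canon s | s <- flatten [seq [seq s | s <- stepimgs r & good r s] | r <- front]] in
  let nw' := [seq x <- nw | ~~ memt x seen] in bfs n (seen ++ nw') nw'.
Proof. by []. Qed.

Lemma bfs_ok r n seen front : (forall x, x \in seen -> GI r x) -> {subset front <= seen} ->
  forall x, x \in bfs n seen front -> GI r x.
Proof.
elim: n seen front => [|n IH] seen front Hs Hf; first exact: Hs.
rewrite bfsS; apply: IH; last by move=> x; rewrite mem_cat => ->; rewrite orbT.
move=> x; rewrite mem_cat => /orP[/Hs //|].
rewrite mem_filter => /andP[_ /undupt_sub /mapP[s]].
move=> /flattenP[l /mapP[r' hr' ->]] /mapP[s0]; rewrite mem_filter => /andP[hg hs] -> ->.
case/and4P: hg => vs fs vc fc.
have [vr' fr' er'] := Hs _ (Hf _ hr').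
split => //; apply: rst_trans er' _; apply: rst_trans (rst_step _ _ _ _ (step_geo vr' fr' vs fs hs)) _.
exact: rst_step (conj_geo vs fs vc fc).
Qed.

Lemma reach_ok r : validt r -> fullgen r -> forall x, x \in reach r -> GI r x.
Proof.
move=> vr fr; rewrite /reach; apply: bfs_ok => // x; rewrite inE => /eqP ->; split => //; exact: rst_refl.
Qed.

Lemma forall3P (P : itr -> bool) t : forall3 P -> validt t -> P t.
Proof.
case: t => [[a b] c] H /and3P[ha hb hc].
by have := allP (allP (allP H a _) b _) c; rewrite !mem_iota /=; apply.
Qed.

Lemma C1P t : validt t -> genb t -> forall s, s \in stepimgs t -> clsf (tvn s) = clsf (tvn t).
Proof.
move=> vt gt s hs; have := forall3P check_C1_ok vt => /implyP/(_ gt)/allP/(_ s hs)/eqP; done.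
Qed.

Lemma sgnt_in e1 e2 e3 t : sgnt e1 e2 e3 t \in stepimgs t.
Proof.
by case: e1; case: e2; case: e3; rewrite /stepimgs /B2 /= !inE eqxx ?orbT.
Qed.

Lemma step_cls T T' : geo_step T T' -> exists t t',
  [/\ validt t, validt t', T = E t, T' = E t' & clsf (tvn t') = clsf (tvn t)].
Proof.
case=> gT gT' H.
have [t [vt Et gt]] := gen_idx gT; have [t' [vt' Et' gt']] := gen_idx gT'.
exists t, t'; split => //; subst T T'.
case: H => [H|[H|[H|[[P SP H]|H]]]].
- have [e v] := om1E vt; rewrite e in H; rewrite (E_inj vt' v H).
  by apply: C1P => //; rewrite /stepimgs inE eqxx.
- have [e v] := om2E vt; rewrite e in H; rewrite (E_inj vt' v H).
  by apply: C1P => //; rewrite /stepimgs !inE eqxx ?orbT.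
- have [e v] := om3E vt; rewrite e in H; rewrite (E_inj vt' v H).
  by apply: C1P => //; rewrite /stepimgs !inE eqxx ?orbT.
- have : tvm (E t') = tvm (E t) by rewrite H tvm_conj.
  by move/(tvn_inj vt' vt) ->.
- have : exists e1 e2 e3, E t' = E (sgnt e1 e2 e3 t).
    clear gT gT'; move: H; case: t vt {gt} => [[a b] c] vt [e1 [e2 [e3 [e4 [_ H]]]]].
    exists e1, e2, e3; rewrite H; by case: (sgntE e1 e2 e3 vt).
  case=> e1 [e2 [e3 H']].
  have [_ v] := sgntE e1 e2 e3 vt.
  rewrite (E_inj vt' v H'); apply: C1P => //; exact: sgnt_in.
Qed.

Definition PC (c : nat) T := exists t, [/\ validt t, T = E t & clsf (tvn t) = c].

Lemma step_PC T T' c : geo_step T T' -> (PC c T <-> PC c T').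
Proof.
case/step_cls => t [t' [vt vt' -> -> hc]]; split.
- case=> s [vs /(E_inj vt vs) <- <-]; by exists t'.
- case=> s [vs /(E_inj vt' vs) <- <-]; by exists t.
Qed.

Lemma geo_PC T T' : geo_equiv T T' -> forall c, PC c T <-> PC c T'.
Proof.
elim => [x y /step_PC //|x|x y _ IH c|x y z _ IH1 _ IH2 c].
- by [].
- by rewrite IH.
- by rewrite IH1 IH2.
Qed.

Lemma memt_in x l : memt x l -> x \in l.
Proof.
case/hasP => y hy; case: x => [[a b] c]; case: y hy => [[a' b'] c'] hy /and3P[].
by move=> /eqnP -> /eqnP -> /eqnP ->.
Qed.

Opaque iblocks.

Definition r0 : itr := (0, 0, 0)%N.

Lemma reps_ok r : r \in flatten iblocks -> validt r /\ fullgen r.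
Proof. by case/and4P: check_reps_ok => _ /allP H _ _ /H /andP. Qed.
Lemma roots_ok r : r \in roots -> validt r /\ fullgen r.
Proof. by case/and4P: check_reps_ok => _ _ /allP H _ /H /andP. Qed.
Lemma reps_uniq : uniq (map tvn (flatten iblocks)).
Proof. by case/and4P: check_reps_ok. Qed.
Lemma blocks_cls i r : (i < 6)%N -> r \in nth [::] iblocks i -> clsf (tvn r) = i.
Proof.
case/and4P: check_reps_ok => _ _ _ /allP H hi hr.
by have := H i; rewrite mem_iota /= => /(_ hi) /allP /(_ r hr) /eqP.
Qed.
Lemma size_iblocks : size iblocks = 6%N.
Proof. by rewrite -(size_map size) check_sizes. Qed.

Notation BL := (map (map E) iblocks).

Lemma FL : flatten BL = map E (flatten iblocks).
Proof. by rewrite map_flatten. Qed.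

Lemma L1 : map size BL = [:: 96; 32; 48; 72; 128; 144]%N.
Proof. rewrite -map_comp -check_sizes; apply: eq_map => b /=; by rewrite size_map. Qed.

Lemma SZ : size (flatten iblocks) = 520%N.
Proof. by rewrite size_flatten /shape check_sizes. Qed.

Lemma L2 : size (flatten BL) = 520%N.
Proof. by rewrite FL size_map SZ. Qed.

Lemma L3 : forall T, T \in flatten BL -> generates_Gamma T.
Proof. move=> T; rewrite FL => /mapP[r hr ->]; have [vr fr] := reps_ok hr; exact: gen_full'. Qed.

Lemma L4 : forall T, generates_Gamma T -> exists2 T', T' \in flatten BL & conj_equiv T T'.
Proof.
move=> T gT; have [t [vt -> gt]] := gen_idx gT.
have := forall3P check_C2_ok vt => /implyP /(_ gt) /memt_in hc.
exists (E (canon t)); first by rewrite FL; apply: map_f.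
by case: (conj_canon vt).
Qed.

Lemma L5 : forall i j, (i < size (flatten BL))%N -> (j < size (flatten BL))%N ->
  i <> j -> ~ conj_equiv (nth T0 (flatten BL) i) (nth T0 (flatten BL) j).
Proof.
rewrite FL size_map => i j hi hj nij [P SP].
rewrite !(nth_map r0) // => H.
have [vi _] := reps_ok (mem_nth r0 hi); have [vj _] := reps_ok (mem_nth r0 hj).
have : tvm (E (nth r0 (flatten iblocks) j)) = tvm (E (nth r0 (flatten iblocks) i)) by rewrite H tvm_conj.
move/(tvn_inj vj vi) => e; apply: nij.
have hi' : (i < size (map tvn (flatten iblocks)))%N by rewrite size_map.
have hj' : (j < size (map tvn (flatten iblocks)))%N by rewrite size_map.
have := nth_uniq [::] hi' hj' reps_uniq.
rewrite !(nth_map r0) // e eqxx => /esym/eqP //.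
Qed.

Lemma L6 : forall b, b \in BL -> forall T T', T \in b -> T' \in b -> geo_equiv T T'.
Proof.
move=> b /mapP[b' /mapP[r hr ->] ->] T T' /mapP[x hx ->] /mapP[y hy ->].
have [vr fr] := roots_ok hr.
have [_ _ ex] := reach_ok vr fr hx; have [_ _ ey] := reach_ok vr fr hy.
exact: rst_trans (rst_sym _ _ _ _ ex) ey.
Qed.

Lemma L7 : forall i j, (i < size BL)%N -> (j < size BL)%N -> i <> j ->
  forall T T', T \in nth [::] BL i -> T' \in nth [::] BL j -> ~ geo_equiv T T'.
Proof.
rewrite size_map size_iblocks => i j hi hj nij T T'.
rewrite !(nth_map [::]) ?size_iblocks // => /mapP[x hx ->] /mapP[y hy ->] G.
have hxf : x \in flatten iblocks by apply/flattenP; exists (nth [::] iblocks i) => //; rewrite mem_nth ?size_iblocks.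
have hyf : y \in flatten iblocks by apply/flattenP; exists (nth [::] iblocks j) => //; rewrite mem_nth ?size_iblocks.
have [vx _] := reps_ok hxf; have [vy _] := reps_ok hyf.
have : PC i (E x) by exists x; split => //; exact: blocks_cls.
move/(geo_PC G) => [z [vz /(E_inj vy vz) <-]].
by rewrite (blocks_cls hj hy) => /esym.
Qed.

Theorem mainTheorem2 :
  exists blocks : seq (seq triple),
    map size blocks = [:: 96; 32; 48; 72; 128; 144]%N /\
        size (flatten blocks) = 520%N /\
        (* representatives are elements of S *)
        (forall T, T \in flatten blocks -> generates_Gamma T) /\
        (* every generating triple is conjugate to a representative *)
        (forall T, generates_Gamma T ->
           exists2 T', T' \in flatten blocks & conj_equiv T T') /\
        (* distinct representatives are not conjugate *)
        (forall i j, (i < size (flatten blocks))%N -> (j < size (flatten blocks))%N ->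
           i <> j -> ~ conj_equiv (nth T0 (flatten blocks) i) (nth T0 (flatten blocks) j)) /\
        (* each block lies in a single geometric equivalence class *)
        (forall b, b \in blocks -> forall T T', T \in b -> T' \in b -> geo_equiv T T') /\
        (* different blocks lie in different geometric equivalence classes *)
        (forall i j, (i < size blocks)%N -> (j < size blocks)%N -> i <> j ->
           forall T T', T \in nth [::] blocks i -> T' \in nth [::] blocks j ->
             ~ geo_equiv T T').
Proof.
exists BL.
split; first exact: L1.
split; first exact: L2.
split; first exact: L3.
split; first exact: L4.
split; first exact: L5.
split; first exact: L6.
exact: L7.
Qed.
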